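(* With $0<q<1$, $\sigma\in\mathbb{R}$ and $v_\lambda=\sum_{n\ge0}\phi_n(\lambda)e_n$ as in the context, for every $x\in\mathbb{Z}_+$: $$\|v_{q^{2\sigma+2x}}\|^2=\sum_{n=0}^\infty\frac{q^{n(n-1)}q^{-2\sigma n}}{(q^2;q^2)_n}\left({}_2\varphi_1\!\left({q^{-2x},q^{-2n}\atop 0};q^2,-q^{2+2\sigma+2x}\right)\right)^2 = q^{-2x}(q^2;q^2)_x(-q^{2\sigma+2};q^2)_x(-q^{-2\sigma};q^2)_\infty,$$ and $\|v_{-q^{2x}}\|^2$ is given by the same expression with $\sigma$ replaced by $-\sigma$, i.e. equals $q^{-2x}(q^2;q^2)_x(-q^{2-2\sigma};q^2)_x(-q^{2\sigma};q^2)_\infty$. Moreover, for $\lambda\in\mathbb{C}\setminus\{0\}$ not of the form $-q^{2x}$ or $q^{2\sigma+2x}$ ($x\in\mathbb{Z}_+$), $v_\lambda\notin\ell^2(\mathbb{Z}_+)$.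
   Context: $(a;q)_n=\prod_{j=0}^{n-1}(1-aq^j)$, $(a;q)_\infty=\prod_{j\ge0}(1-aq^j)$; ${}_2\varphi_1\!\left({a,b\atop c};q,z\right)=\sum_{k\ge0}\frac{(a;q)_k(b;q)_k}{(c;q)_k(q;q)_k}z^k$ (terminating here). $\{e_n\}$ is the standard orthonormal basis of $\ell^2(\mathbb{Z}_+)$, $\phi_n(\lambda)= i^n q^{-\sigma n} q^{-\frac12 n(n-1)} (q^2;q^2)_n^{-1/2}\hat P_n(\lambda;0,0,q^{2\sigma},1;q^2)$, where the monic polynomials $\hat P_n(x;0,0,c,d;q)$ are defined by $\hat P_{-1}=0$, $\hat P_0=1$, $x\hat P_n=\hat P_{n+1}+q^n(c-d)\hat P_n+q^{n-1}cd(1-q^n)\hat P_{n-1}$; equivalently $\hat P_n(x;0,0,c,d;q)=d^n q^{\frac12 n(n-1)}\sum_{k=0}^n \frac{(q^{-n};q)_k (c/x;q)_k}{(q;q)_k}(-qx/d)^k$. *)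

(* Defs.v *)
From Stdlib Require Import Reals.
From Coquelicot Require Import Coquelicot.
Open Scope R_scope.

Fixpoint qpoch (a q : R) (n : nat) : R :=
  match n with
  | O => 1
  | S m => qpoch a q m * (1 - a * q ^ m)
  end.

Definition qpoch_inf (a q : R) : R := real (Lim_seq (fun n => qpoch a q n)).

(* terminating 2phi1(a, q^{-N}; c; q, z) = sum_{k=0}^{N} (a;q)_k (b;q)_k / ((c;q)_k (q;q)_k) z^k;
   with b = q^{-N} all terms with k > N vanish, so summing up to N is the full series *)
Definition phi21_term (a b c q z : R) (k : nat) : R :=
  qpoch a q k * qpoch b q k / (qpoch c q k * qpoch q q k) * z ^ k.
Definition phi21_trunc (a b c q z : R) (N : nat) : R :=
  sum_f_R0 (phi21_term a b c q z) N.

Fixpoint Cpown (z : C) (n : nat) : C :=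
  match n with
  | O => RtoC 1
  | S m => Cmult (Cpown z m) z
  end.

(* monic polynomials hatP_n(x;0,0,c,d;q) by the three-term recurrence
   x P_n = P_{n+1} + q^n (c-d) P_n + q^{n-1} c d (1-q^n) P_{n-1}, P_{-1}=0, P_0=1.
   hatP_pair c d q x n = (P_n(x), P_{n+1}(x)). *)
Fixpoint hatP_pair (c d q : R) (x : C) (n : nat) : C * C :=
  match n with
  | O => (RtoC 1, Cminus x (RtoC (c - d)))
  | S m =>
      let (p_m, p_n) := hatP_pair c d q x m in
      (p_n, Cminus (Cmult (Cminus x (RtoC (q ^ (S m) * (c - d)))) p_n)
                   (Cmult (RtoC (q ^ m * c * d * (1 - q ^ (S m)))) p_m))
  end.
Definition hatP (c d q : R) (n : nat) (x : C) : C := fst (hatP_pair c d q x n).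

Definition phi_n (q sigma : R) (n : nat) (lam : C) : C :=
  Cmult (Cmult (Cpown Ci n)
     (RtoC (Rpower q (- sigma * INR n) * Rpower q (- (INR n * (INR n - 1)) / 2)
            / sqrt (qpoch (q ^ 2) (q ^ 2) n))))
     (hatP (Rpower q (2 * sigma)) 1 (q ^ 2) n lam).

Definition vnorm2_term (q sigma : R) (lam : C) (n : nat) : R :=
  (Cmod (phi_n q sigma n lam)) ^ 2.

Definition v_in_l2 (q sigma : R) (lam : C) : Prop := ex_series (vnorm2_term q sigma lam).

(* Main.v *)
Require Import Defs.
From Stdlib Require Import Reals Lra Lia Psatz.
From Coquelicot Require Import Coquelicot.
Open Scope R_scope.

Fixpoint tt (Q : R) (j : nat) : R :=
  match j with O => 1 | S m => tt Q m * Q ^ m end.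

Fixpoint qbin (Q : R) (n j : nat) : R :=
  match n, j with
  | _, O => 1
  | O, S _ => 0
  | S n', S j' => qbin Q n' (S j') + Q ^ (n' - j') * qbin Q n' j'
  end.

Lemma qbin_gt Q : forall n j, (n < j)%nat -> qbin Q n j = 0.
Proof.
  induction n; intros j H; destruct j; try lia; simpl; auto.
  rewrite !IHn by lia. ring.
Qed.

Lemma qbin_nn Q : forall n, qbin Q n n = 1.
Proof. induction n; simpl; auto. rewrite qbin_gt by lia. rewrite Nat.sub_diag, IHn. ring. Qed.

Lemma pow_le1' x n : 0 <= x <= 1 -> x ^ n <= 1.
Proof. intros H. rewrite <- (pow1 n). apply pow_incr. lra. Qed.

Lemma qpochS a Q n : qpoch a Q (S n) = qpoch a Q n * (1 - a * Q ^ n).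
Proof. reflexivity. Qed.

Lemma qpQ_pos Q n : 0 < Q < 1 -> 0 < qpoch Q Q n.
Proof.
  intros HQ; induction n; simpl; [lra|].
  apply Rmult_lt_0_compat; auto.
  assert (Q * Q ^ n < 1).
  { assert (0 < Q ^ n <= 1) by (split; [apply pow_lt; lra| apply pow_le1'; lra]). nra. }
  lra.
Qed.

Lemma qbin_closed Q : 0 < Q < 1 -> forall n j, (j <= n)%nat ->
  qbin Q n j * qpoch Q Q j * qpoch Q Q (n - j) = qpoch Q Q n.
Proof.
  intros HQ; induction n; intros j Hj.
  - destruct j; [simpl; ring| lia].
  - destruct j.
    + simpl. ring.
    + simpl qbin. destruct (Nat.eq_dec j n) as [->|Hne].
      * rewrite qbin_gt by lia. rewrite Nat.sub_diag.
        rewrite qbin_nn. simpl; rewrite ?Nat.sub_diag; simpl; ring.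
      * assert (E1 := IHn (S j) ltac:(lia)). assert (E2 := IHn j ltac:(lia)).
        replace (S n - S j)%nat with (S (n - S j)) by lia.
        replace (n - j)%nat with (S (n - S j)) in E2 |- * by lia.
        rewrite !qpochS in *.
        replace (Q ^ S (n - S j)) with (Q * Q^(n - S j)) by reflexivity.
        replace (Q * Q ^ n) with (Q ^ (S (n - S j)) * Q ^ (S j)) by
          (rewrite <- pow_add; change (Q * Q ^ n) with (Q ^ (S n)); f_equal; lia).
        simpl pow.
        set (u := Q * Q ^ (n - S j)) in *. set (v := Q * Q ^ j) in *.
        transitivity ((qbin Q n (S j) * (qpoch Q Q j * (1 - v)) * qpoch Q Q (n - S j)) * (1 - u)
          + u * (1 - v) * (qbin Q n j * qpoch Q Q j * (qpoch Q Q (n - S j) * (1 - u)))); [ring|].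
        rewrite E1, E2. ring.
Qed.

Fixpoint Csum (f : nat -> C) (n : nat) : C :=
  match n with O => f O | S m => Cplus (Csum f m) (f (S m)) end.

Fixpoint Cqp (v : C) (Q : R) (n : nat) : C :=
  match n with O => RtoC 1 | S m => Cmult (Cqp v Q m) (Cminus (RtoC 1) (Cmult v (RtoC (Q ^ m)))) end.

Lemma Csum_ext_le f g n : (forall j, (j <= n)%nat -> f j = g j) -> Csum f n = Csum g n.
Proof.
  induction n; intros H; simpl. apply H; lia.
  rewrite IHn by (intros; apply H; lia). rewrite H by lia. reflexivity.
Qed.

Lemma Csum_shift f n : Csum f (S n) = Cplus (f O) (Csum (fun j => f (S j)) n).
Proof.
  induction n; simpl. reflexivity.
  simpl in IHn. rewrite IHn. ring.
Qed.

Lemma Csum_plus f g n : Csum (fun j => Cplus (f j) (g j)) n = Cplus (Csum f n) (Csum g n).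
Proof. induction n; simpl; [reflexivity|]. rewrite IHn. ring. Qed.

Lemma Csum_scal a f n : Csum (fun j => Cmult a (f j)) n = Cmult a (Csum f n).
Proof. induction n; simpl; [reflexivity|]. rewrite IHn. ring. Qed.

Lemma Csum_zero f n : (forall j, (j <= n)%nat -> f j = RtoC 0) -> Csum f n = RtoC 0.
Proof.
  induction n; intros H; simpl. apply H; lia.
  rewrite IHn by (intros; apply H; lia). rewrite H by lia. ring.
Qed.

Lemma Cpown_S z n : Cpown z (S n) = Cmult (Cpown z n) z.
Proof. reflexivity. Qed.

Lemma Rothe_C (Q : R) (v : C) n :
  Cqp v Q n = Csum (fun j => Cmult (RtoC (qbin Q n j * tt Q j)) (Cpown (Copp v) j)) n.
Proof.
  induction n.
  - simpl. apply injective_projections; simpl; ring.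
  - rewrite Csum_shift.
    transitivity (Cplus (Csum (fun j => Cmult (RtoC (qbin Q n j * tt Q j)) (Cpown (Copp v) j)) n)
                        (Csum (fun j => Cmult (RtoC (qbin Q n j * tt Q j * Q ^ n)) (Cpown (Copp v) (S j))) n)).
    { simpl Cqp. rewrite IHn. rewrite Cmult_comm.
      replace (Csum (fun j => Cmult (RtoC (qbin Q n j * tt Q j * Q ^ n)) (Cpown (Copp v) (S j))) n)
        with (Cmult (Cmult (Copp v) (RtoC (Q ^ n))) (Csum (fun j => Cmult (RtoC (qbin Q n j * tt Q j)) (Cpown (Copp v) j)) n)).
      2:{ rewrite <- Csum_scal. apply Csum_ext_le. intros j _. rewrite Cpown_S, !RtoC_mult. ring. }
      ring. }
    assert (Hs : Csum (fun j => Cmult (RtoC (qbin Q n j * tt Q j)) (Cpown (Copp v) j)) n =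
       Cplus (RtoC 1) (Csum (fun j => Cmult (RtoC (qbin Q n (S j) * tt Q (S j))) (Cpown (Copp v) (S j))) n)).
    { destruct n.
      - simpl. rewrite Rmult_1_l, Rmult_0_l. apply injective_projections; simpl; ring.
      - rewrite Csum_shift. cbn [Csum].
        rewrite (qbin_gt Q (S n) (S (S n))) by lia.
        replace (Cmult (RtoC (0 * tt Q (S (S n)))) (Cpown (Copp v) (S (S n)))) with (RtoC 0)
          by (rewrite Rmult_0_l; apply injective_projections; simpl; ring).
        replace (Cmult (RtoC (qbin Q (S n) 0 * tt Q 0)) (Cpown (Copp v) 0)) with (RtoC 1)
          by (simpl; apply injective_projections; simpl; ring).
        f_equal. apply injective_projections; simpl; ring. }
    rewrite Hs. simpl qbin at 2. rewrite <- Cplus_assoc. f_equal.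
    { simpl. apply injective_projections; simpl; ring. }
    match goal with |- Cplus (Csum ?f n) (Csum ?g n) = _ =>
      transitivity (Csum (fun j => Cplus (f j) (g j)) n); [symmetry; apply Csum_plus|] end.
    apply Csum_ext_le. intros j Hj.
    simpl tt.
    replace (Q ^ n) with (Q ^ (n - j) * Q ^ j) by (rewrite <- pow_add; f_equal; lia).
    rewrite <- Cmult_plus_distr_r, <- RtoC_plus. f_equal. f_equal. simpl. ring.
Qed.

Fixpoint Cpi (c Q : R) (x : C) (m : nat) : C :=
  match m with O => RtoC 1 | S k => Cmult (Cpi c Q x k) (Cminus x (RtoC (c * Q ^ k))) end.

Definition Acoef Q n j := qbin Q n j * tt Q j.

Definition RnP (c Q : R) (n : nat) (x : C) : C :=
  Csum (fun j => Cmult (RtoC (Acoef Q n j)) (Cpi c Q x (n - j))) n.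

Definition sh (a : nat -> R) (j : nat) : R := match j with O => 0 | S k => a k end.

Lemma qbin_ratio Q : 0 < Q < 1 -> forall m k, (k <= m)%nat ->
  (1 - Q ^ (S m)) * qbin Q m k = (1 - Q ^ (S k)) * qbin Q (S m) (S k).
Proof.
  intros HQ m k Hk.
  assert (E1 := qbin_closed Q HQ m k Hk).
  assert (E2 := qbin_closed Q HQ (S m) (S k) ltac:(lia)).
  replace (S m - S k)%nat with (m - k)%nat in E2 by lia.
  rewrite !qpochS in E2.
  assert (P1 := qpQ_pos Q k HQ). assert (P2 := qpQ_pos Q (m - k) HQ).
  apply (Rmult_eq_reg_r (qpoch Q Q k * qpoch Q Q (m - k))); [|apply Rgt_not_eq; nra].
  simpl pow. rewrite <- E1 in E2.
  transitivity (qbin Q m k * qpoch Q Q k * qpoch Q Q (m - k) * (1 - Q * Q ^ m)); [ring|].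
  rewrite <- E2. ring.
Qed.

Section Rec.
Variables (c Q : R) (x : C).
Notation pi := (Cpi c Q x).

Lemma sum_sh (a : nat -> R) n :
  Csum (fun j => Cmult (RtoC (sh a j)) (pi (S n - j))) (S n) =
  Csum (fun j => Cmult (RtoC (a j)) (pi (n - j))) n.
Proof.
  rewrite Csum_shift. simpl sh.
  replace (Cmult (RtoC 0) (pi (S n - 0))) with (RtoC 0) by (apply injective_projections; simpl; ring).
  rewrite Cplus_0_l. reflexivity.
Qed.

Lemma sum_drop (a : nat -> R) n m : a (S n) = 0 ->
  Csum (fun j => Cmult (RtoC (a j)) (pi (m - j))) (S n) =
  Csum (fun j => Cmult (RtoC (a j)) (pi (m - j))) n.
Proof.
  intros H. simpl. rewrite H.
  replace (Cmult (RtoC 0) (pi (m - S n))) with (RtoC 0) by (apply injective_projections; simpl; ring).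
  apply Cplus_0_r.
Qed.

Lemma x_mul (a : nat -> R) n :
  Cmult x (Csum (fun j => Cmult (RtoC (a j)) (pi (n - j))) n) =
  Cplus (Csum (fun j => Cmult (RtoC (a j)) (pi (S n - j))) n)
        (Csum (fun j => Cmult (RtoC (a j * (c * Q ^ (n - j)))) (pi (n - j))) n).
Proof.
  rewrite <- Csum_scal, <- Csum_plus. apply Csum_ext_le. intros j Hj.
  replace (S n - j)%nat with (S (n - j)) by lia. simpl pi.
  rewrite !RtoC_mult. ring.
Qed.

End Rec.

Lemma Rn_rec (c Q : R) (x : C) m : 0 < Q < 1 ->
  RnP c Q (S (S m)) x =
  Cminus (Cmult (Cminus x (RtoC (Q ^ (S m) * (c - 1)))) (RnP c Q (S m) x))
         (Cmult (RtoC (Q ^ m * c * 1 * (1 - Q ^ (S m)))) (RnP c Q m x)).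
Proof.
  intros HQ. unfold RnP.
  set (N := S (S m)).
  set (B := fun j => Acoef Q (S m) j * (c * Q ^ (S m - j))).
  assert (HxR : Cmult x (Csum (fun j => Cmult (RtoC (Acoef Q (S m) j)) (Cpi c Q x (S m - j))) (S m)) =
     Csum (fun j => Cmult (RtoC (Acoef Q (S m) j + sh B j)) (Cpi c Q x (N - j))) N).
  { transitivity (Cplus (Csum (fun j => Cmult (RtoC (Acoef Q (S m) j)) (Cpi c Q x (N - j))) N)
                         (Csum (fun j => Cmult (RtoC (sh B j)) (Cpi c Q x (N - j))) N)).
    - rewrite x_mul. unfold N. f_equal.
      + symmetry. apply sum_drop. unfold Acoef; rewrite qbin_gt by lia; ring.
      + rewrite sum_sh. reflexivity.
    - rewrite <- Csum_plus. apply Csum_ext_le. intros j _. rewrite RtoC_plus. ring. }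
  assert (H1 : Csum (fun j => Cmult (RtoC (Acoef Q (S m) j)) (Cpi c Q x (S m - j))) (S m) =
     Csum (fun j => Cmult (RtoC (sh (Acoef Q (S m)) j)) (Cpi c Q x (N - j))) N).
  { unfold N. rewrite sum_sh. reflexivity. }
  assert (H0 : Csum (fun j => Cmult (RtoC (Acoef Q m j)) (Cpi c Q x (m - j))) m =
     Csum (fun j => Cmult (RtoC (sh (sh (Acoef Q m)) j)) (Cpi c Q x (N - j))) N).
  { unfold N. rewrite !sum_sh. reflexivity. }
  match goal with |- _ = Cminus (Cmult (Cminus x ?K1) ?S1) (Cmult ?K2 ?S0) =>
    transitivity (Cplus (Cmult x S1) (Cplus (Cmult (Copp K1) S1) (Cmult (Copp K2) S0))); [|ring] end.
  rewrite HxR, H1, H0. rewrite <- !Csum_scal, <- !Csum_plus.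
  apply Csum_ext_le. intros j Hj.
  assert (Hc : Acoef Q N j = Acoef Q (S m) j + sh B j - Q ^ S m * (c - 1) * sh (Acoef Q (S m)) j
             - Q ^ m * c * 1 * (1 - Q ^ S m) * sh (sh (Acoef Q m)) j).
  { unfold N, B, Acoef. destruct j as [|[|k]]; cbn [sh].
    - simpl. ring.
    - simpl qbin. simpl tt. rewrite Nat.sub_0_r. simpl pow. ring.
    - assert (Hk : (k <= m)%nat) by (unfold N in Hj; lia).
      assert (Hr := qbin_ratio Q HQ m k Hk).
      change (qbin Q (S (S m)) (S (S k))) with (qbin Q (S m) (S (S k)) + Q ^ (m - k) * qbin Q (S m) (S k)).
      replace (S m - S k)%nat with (m - k)%nat by lia.
      set (r := Q ^ (m - k)).
      assert (Hm : Q ^ m = r * Q ^ k) by (unfold r; rewrite <- pow_add; f_equal; lia).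
      simpl tt. simpl pow in *. rewrite Hm in *.
      set (Y := qbin Q (S m) (S k)) in *. set (Z := qbin Q m k) in *.
      transitivity (qbin Q (S m) (S (S k)) * (tt Q k * Q ^ k * (Q * Q ^ k)) + Y * tt Q k * Q ^ k * r * Q * Q^k); [ring|].
      transitivity (qbin Q (S m) (S (S k)) * (tt Q k * Q ^ k * (Q * Q ^ k)) + Y * tt Q k * Q ^ k * c * r
        - Q * (r * Q ^ k) * (c - 1) * Y * tt Q k * Q ^ k - r * Q ^ k * c * tt Q k * ((1 - Q * (r * Q ^ k)) * Z)); [|ring].
      rewrite Hr. ring. }
  rewrite Hc. apply injective_projections; simpl; ring.
Qed.

Lemma hatP_Rn (c Q : R) (x : C) : 0 < Q < 1 -> forall n,
  hatP_pair c 1 Q x n = (RnP c Q n x, RnP c Q (S n) x).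
Proof.
  intros HQ n. induction n.
  - simpl. unfold RnP. simpl. unfold Acoef. simpl.
    f_equal; apply injective_projections; simpl; ring.
  - simpl hatP_pair. rewrite IHn. rewrite (Rn_rec c Q x n HQ). reflexivity.
Qed.

Fixpoint Rpi (c Q : R) (r : R) (m : nat) : R :=
  match m with O => 1 | S k => Rpi c Q r k * (r - c * Q ^ k) end.

Definition Rr (c Q : R) (n : nat) (r : R) : R :=
  sum_f_R0 (fun j => Acoef Q n j * Rpi c Q r (n - j)) n.

Lemma RtoC_inj (a b : R) : RtoC a = RtoC b -> a = b.
Proof. intros H. apply (f_equal fst) in H. exact H. Qed.

Lemma Csum_RtoC f n : Csum (fun j => RtoC (f j)) n = RtoC (sum_f_R0 f n).
Proof. induction n; simpl; [reflexivity|]. rewrite IHn, RtoC_plus. reflexivity. Qed.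

Lemma Cpi_RtoC c Q r m : Cpi c Q (RtoC r) m = RtoC (Rpi c Q r m).
Proof.
  induction m; simpl; [reflexivity|]. rewrite IHm.
  apply injective_projections; simpl; ring.
Qed.

Lemma Rn_RtoC c Q n r : RnP c Q n (RtoC r) = RtoC (Rr c Q n r).
Proof.
  unfold RnP, Rr. rewrite <- Csum_RtoC. apply Csum_ext_le. intros j _.
  rewrite Cpi_RtoC, RtoC_mult. reflexivity.
Qed.

Lemma Rr_rec c Q r m : 0 < Q < 1 ->
  Rr c Q (S (S m)) r = (r - Q ^ (S m) * (c - 1)) * Rr c Q (S m) r
                       - Q ^ m * c * 1 * (1 - Q ^ (S m)) * Rr c Q m r.
Proof.
  intros HQ. apply RtoC_inj. rewrite <- !Rn_RtoC. rewrite Rn_rec by auto.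
  rewrite !Rn_RtoC. apply injective_projections; simpl; ring.
Qed.

Lemma Rr_0 c Q r : Rr c Q 0 r = 1.
Proof. unfold Rr, Acoef. simpl. ring. Qed.
Lemma Rr_1 c Q r : Rr c Q 1 r = r - (c - 1).
Proof. unfold Rr, Acoef. simpl. ring. Qed.

Lemma Cqp_RtoC u Q n : Cqp (RtoC u) Q n = RtoC (qpoch u Q n).
Proof. induction n; simpl; [reflexivity|]. rewrite IHn. apply injective_projections; simpl; ring. Qed.

Lemma Cpown_RtoC u n : Cpown (RtoC u) n = RtoC (u ^ n).
Proof. induction n; simpl; [reflexivity|]. rewrite IHn. apply injective_projections; simpl; ring. Qed.

Lemma Rothe_R Q u n :
  qpoch u Q n = sum_f_R0 (fun j => qbin Q n j * tt Q j * (- u) ^ j) n.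
Proof.
  apply RtoC_inj. rewrite <- Cqp_RtoC, Rothe_C, <- Csum_RtoC.
  apply Csum_ext_le. intros j _.
  replace (Copp (RtoC u)) with (RtoC (- u)) by (apply injective_projections; simpl; ring).
  rewrite Cpown_RtoC, !RtoC_mult. reflexivity.
Qed.

Lemma sum_rev f n : sum_f_R0 f n = sum_f_R0 (fun k => f (n - k)%nat) n.
Proof.
  revert f; induction n; intros f; [reflexivity|].
  rewrite (decomp_sum f (S n)) by lia. simpl pred.
  rewrite (IHn (fun i => f (S i))). rewrite tech5. rewrite Nat.sub_diag.
  rewrite Rplus_comm. f_equal.
  apply sum_eq. intros i Hi. f_equal. lia.
Qed.

Lemma sum_extend f n m : (n <= m)%nat -> (forall k, (n < k)%nat -> f k = 0) ->
  sum_f_R0 f m = sum_f_R0 f n.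
Proof.
  intros Hnm H. induction m.
  - replace n with 0%nat by lia. reflexivity.
  - destruct (Nat.eq_dec n (S m)) as [->|Hne]; [reflexivity|].
    simpl. rewrite IHm by lia. rewrite H by lia. ring.
Qed.

Lemma sum_swap (F : nat -> nat -> R) n m :
  sum_f_R0 (fun k => sum_f_R0 (fun j => F k j) m) n =
  sum_f_R0 (fun j => sum_f_R0 (fun k => F k j) n) m.
Proof.
  induction n; simpl; [reflexivity|].
  rewrite IHn. rewrite <- sum_plus. reflexivity.
Qed.

Lemma sum_scal_l a f n : sum_f_R0 (fun j => a * f j) n = a * sum_f_R0 f n.
Proof. induction n; simpl; [reflexivity|]. rewrite IHn. ring. Qed.

Lemma tt_add Q a b : tt Q (a + b) = tt Q a * tt Q b * Q ^ (a * b).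
Proof.
  induction b.
  - rewrite Nat.add_0_r, Nat.mul_0_r. simpl. ring.
  - rewrite Nat.add_succ_r. simpl tt. rewrite IHb.
    replace (a * S b)%nat with (a * b + a)%nat by lia.
    rewrite !pow_add. ring.
Qed.

Lemma tt_sq Q k : tt Q k * tt Q k * Q ^ k = Q ^ (k * k).
Proof.
  induction k; simpl tt; [simpl; ring|].
  replace (S k * S k)%nat with (k * k + (k + k + 1))%nat by lia.
  rewrite pow_add, <- IHk, !pow_add. simpl. ring.
Qed.

Lemma tt_pos Q k : 0 < Q -> 0 < tt Q k.
Proof. intros H; induction k; simpl; [lra|]. apply Rmult_lt_0_compat; auto. apply pow_lt; auto. Qed.

Lemma qbin_sym Q : 0 < Q < 1 -> forall n k, (k <= n)%nat -> qbin Q n (n - k) = qbin Q n k.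
Proof.
  intros HQ n k Hk.
  assert (E1 := qbin_closed Q HQ n k Hk).
  assert (E2 := qbin_closed Q HQ n (n - k) ltac:(lia)).
  replace (n - (n - k))%nat with k in E2 by lia.
  assert (P1 := qpQ_pos Q k HQ). assert (P2 := qpQ_pos Q (n - k) HQ).
  apply (Rmult_eq_reg_r (qpoch Q Q k * qpoch Q Q (n - k))); [|apply Rgt_not_eq; nra].
  transitivity (qpoch Q Q n); [rewrite <- E2; ring| rewrite <- E1; ring].
Qed.

Lemma powpQ Q n : Q <> 0 -> (/ Q) ^ n * Q ^ n = 1.
Proof. intros H. rewrite <- Rpow_mult_distr, Rinv_l by auto. apply pow1. Qed.

Lemma Pn_id Q : 0 < Q < 1 -> forall n k, (k <= n)%nat ->
  qpoch ((/ Q) ^ n) Q k * qpoch Q Q (n - k) = (-1) ^ k * tt Q k * ((/ Q) ^ n) ^ k * qpoch Q Q n.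
Proof.
  intros HQ n k. induction k; intros Hk.
  - simpl. rewrite Nat.sub_0_r. ring.
  - assert (IH := IHk ltac:(lia)).
    replace (n - k)%nat with (S (n - S k)) in IH by lia.
    rewrite qpochS in IH. rewrite qpochS.
    set (p := / Q) in *.
    assert (Hpq : p ^ n * Q ^ (n - S k) * Q ^ k * Q = 1).
    { rewrite <- powpQ with (Q := Q) (n := n) by lra. fold p. 
      replace (Q ^ n) with (Q ^ (n - S k) * Q ^ k * Q)
        by (transitivity (Q ^ (n - S k + k + 1)); [rewrite !pow_add; simpl; ring | f_equal; lia]).
      ring. }
    transitivity ((qpoch (p ^ n) Q k * (qpoch Q Q (n - S k) * (1 - Q * Q ^ (n - S k)))) * (- p ^ n * Q ^ k)).
    + replace (1 - p ^ n * Q ^ k) with ((1 - Q * Q ^ (n - S k)) * (- p ^ n * Q ^ k)).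
      2:{ transitivity (- p ^ n * Q ^ k + (p ^ n * Q ^ (n - S k) * Q ^ k * Q)); [ring|]. rewrite Hpq. ring. }
      ring.
    + rewrite IH. simpl tt. simpl pow. ring.
Qed.

Lemma qpoch_zero_y Q y k : 0 < Q -> (y < k)%nat -> qpoch ((/ Q) ^ y) Q k = 0.
Proof.
  intros HQ H. induction k; [lia|].
  destruct (Nat.eq_dec y k) as [->|Hne].
  - rewrite qpochS. rewrite powpQ by lra. ring.
  - rewrite qpochS, IHk by lia. ring.
Qed.

Lemma key1 Q n k : 0 < Q -> (k <= n)%nat ->
  tt Q n * tt Q k * ((/ Q) ^ n) ^ k * Q ^ k = tt Q (n - k).
Proof.
  intros HQ Hk.
  replace n with ((n - k) + k)%nat at 1 2 by lia.
  rewrite tt_add. rewrite <- pow_mult.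
  replace ((n - k + k) * k)%nat with ((n - k) * k + k * k)%nat by lia.
  rewrite pow_add.
  transitivity (tt Q (n - k) * (tt Q k * tt Q k * Q ^ k) * ((/ Q) ^ ((n - k) * k) * Q ^ ((n - k) * k)) * (/ Q) ^ (k * k)); [ring|].
  rewrite tt_sq, !powpQ by lra.
  transitivity (tt Q (n - k) * ((/ Q) ^ (k * k) * Q ^ (k * k))); [ring|]. rewrite powpQ by lra. ring.
Qed.

Lemma Rpi_mass c Q y k : 0 < Q ->
  Rpi c Q (c * Q ^ y) k = (c * Q ^ y) ^ k * qpoch ((/ Q) ^ y) Q k.
Proof.
  intros HQ. induction k; simpl; [ring|]. rewrite IHk.
  assert (H := powpQ Q y ltac:(lra)).
  replace (c * Q ^ k) with (c * Q ^ y * ((/ Q) ^ y * Q ^ k))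
    by (transitivity (c * ((/ Q) ^ y * Q ^ y) * Q ^ k); [ring| rewrite H; ring]).
  ring.
Qed.

Lemma qpoch_0 Q k : qpoch 0 Q k = 1.
Proof. induction k; simpl; [reflexivity|]. rewrite IHk. ring. Qed.

Lemma Rr_mass c Q y n : 0 < Q < 1 ->
  Rr c Q n (c * Q ^ y) =
  tt Q n * phi21_trunc ((/ Q) ^ y) ((/ Q) ^ n) 0 Q (- (Q * (c * Q ^ y))) n.
Proof.
  intros HQ. unfold Rr, phi21_trunc. rewrite sum_rev. rewrite <- sum_scal_l.
  apply sum_eq. intros k Hk.
  replace (n - (n - k))%nat with k by lia.
  unfold Acoef. rewrite qbin_sym by auto. rewrite Rpi_mass by lra.
  unfold phi21_term. rewrite qpoch_0.
  assert (E := Pn_id Q HQ n k Hk).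
  assert (E1 := qbin_closed Q HQ n k Hk).
  assert (P1 := qpQ_pos Q k HQ). assert (P2 := qpQ_pos Q (n - k) HQ).
  assert (K := key1 Q n k ltac:(lra) Hk).
  rewrite <- K.
  replace (qpoch ((/ Q) ^ n) Q k) with ((-1) ^ k * tt Q k * ((/ Q) ^ n) ^ k * qpoch Q Q n / qpoch Q Q (n - k))
    by (rewrite <- E; field; lra).
  rewrite <- E1. rewrite !Rpow_mult_distr.
  replace ((-1) ^ k * (-1) ^ k) with 1 by (rewrite <- Rpow_mult_distr; replace (-1 * -1) with 1 by ring; rewrite pow1; ring).
  replace ((- (Q * (c * Q ^ y))) ^ k) with ((-1) ^ k * (Q ^ k * (c ^ k * (Q ^ y) ^ k)))
    by (rewrite <- !Rpow_mult_distr; f_equal; ring).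
  assert (Hm1 : (-1) ^ k * (-1) ^ k = 1)
    by (rewrite <- Rpow_mult_distr; replace (-1 * -1) with 1 by ring; apply pow1).
  match goal with |- ?X = _ => transitivity (X * ((-1) ^ k * (-1) ^ k)); [rewrite Hm1; ring|] end.
  field. lra.
Qed.

Lemma exp_le' x y : x <= y -> exp x <= exp y.
Proof. intros [H|H]; [left; apply exp_increasing; auto| subst; lra]. Qed.

Lemma one_minus_exp x Q : 0 <= x <= Q -> Q < 1 -> exp (- x / (1 - Q)) <= 1 - x.
Proof.
  intros Hx HQ.
  assert (H1 : 0 < 1 - x) by lra.
  assert (H2 : exp (x / (1 - x)) >= 1 + x / (1 - x)) by (apply Rle_ge, exp_ineq1_le).
  assert (H3 : 1 + x / (1 - x) = / (1 - x)) by (field; lra).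
  assert (H4 : exp (- x / (1 - Q)) <= exp (- (x / (1 - x)))).
  { apply exp_le'. assert (x / (1 - x) <= x / (1 - Q)).
    { unfold Rdiv. apply Rmult_le_compat_l; [lra|]. apply Rinv_le_contravar; lra. }
    unfold Rdiv in *. lra. }
  rewrite exp_Ropp in H4.
  assert (/ exp (x / (1 - x)) <= 1 - x).
  { assert (Hh : / exp (x / (1 - x)) <= / / (1 - x)) by (apply Rinv_le_contravar; [apply Rinv_0_lt_compat; lra| lra]).
    rewrite Rinv_inv in Hh. exact Hh. }
  lra.
Qed.

Lemma geom_part Q N : Q <> 1 -> sum_f_R0 (fun i => Q ^ i) N = (1 - Q ^ (S N)) / (1 - Q).
Proof.
  intros H. induction N; simpl sum_f_R0.
  - simpl. field. lra.
  - rewrite IHN. simpl. field. lra.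
Qed.

Lemma qpoch_lower Q s : 0 < Q < 1 -> Rabs s <= Q -> forall N,
  exp (- Rabs s / (1 - Q) ^ 2) <= qpoch (- s) Q N.
Proof.
  intros HQ Hs N.
  assert (Hg : forall N, exp (- Rabs s * (1 - Q ^ N) / (1 - Q) ^ 2) <= qpoch (- s) Q N).
  { induction N0.
    - simpl. replace (- Rabs s * (1 - 1) / ((1 - Q) * ((1 - Q) * 1))) with 0 by (field; lra).
      rewrite exp_0. lra.
    - rewrite qpochS.
      assert (HQn : 0 < Q ^ N0 <= 1) by (split; [apply pow_lt; lra| apply pow_le1'; lra]).
      assert (Hf : exp (- (Rabs s * Q ^ N0) / (1 - Q)) <= 1 - - s * Q ^ N0).
      { assert (exp (- (Rabs s * Q ^ N0) / (1 - Q)) <= 1 - Rabs s * Q ^ N0).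
        { apply one_minus_exp; [|lra]. split; [apply Rmult_le_pos; [apply Rabs_pos|lra]|].
          assert (Rabs s * Q ^ N0 <= Rabs s * 1) by (apply Rmult_le_compat_l; [apply Rabs_pos|lra]). lra. }
        assert (- s * Q ^ N0 <= Rabs s * Q ^ N0).
        { apply Rmult_le_compat_r; [lra|]. rewrite <- Rabs_Ropp. apply Rle_abs. }
        lra. }
      replace (- Rabs s * (1 - Q ^ S N0) / (1 - Q) ^ 2) with
        (- Rabs s * (1 - Q ^ N0) / (1 - Q) ^ 2 + - (Rabs s * Q ^ N0) / (1 - Q)) by (simpl; field; lra).
      rewrite exp_plus. apply Rmult_le_compat; try (left; apply exp_pos); auto. }
  eapply Rle_trans; [|apply Hg]. apply exp_le'.
  assert (HQn : 0 < Q ^ N <= 1) by (split; [apply pow_lt; lra| apply pow_le1'; lra]).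
  assert (0 < (1 - Q) ^ 2) by (apply pow_lt; lra).
  unfold Rdiv. apply Rmult_le_compat_r; [left; apply Rinv_0_lt_compat; auto|].
  assert (0 <= Rabs s) by apply Rabs_pos. nra.
Qed.

Definition Lb Q := exp (- Q / (1 - Q) ^ 2).

Lemma Lb_pos Q : 0 < Lb Q.
Proof. apply exp_pos. Qed.

Lemma qpQ_lower Q N : 0 < Q < 1 -> Lb Q <= qpoch Q Q N.
Proof.
  intros HQ. unfold Lb. replace Q with (Rabs (- Q)) at 1 by (rewrite Rabs_Ropp, Rabs_right; lra).
  replace (qpoch Q Q N) with (qpoch (- - Q) Q N) by (f_equal; ring).
  apply qpoch_lower; auto. rewrite Rabs_Ropp, Rabs_right; lra.
Qed.

Lemma qpQ_decr Q n m : 0 < Q < 1 -> (n <= m)%nat -> qpoch Q Q m <= qpoch Q Q n.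
Proof.
  intros HQ H. induction H; [lra|].
  rewrite qpochS. assert (P := qpQ_pos Q m HQ).
  assert (0 < Q * Q ^ m <= 1).
  { assert (0 < Q ^ m <= 1) by (split; [apply pow_lt; lra| apply pow_le1'; lra]). split; nra. }
  nra.
Qed.

Lemma qbin_nonneg Q : 0 <= Q -> forall n j, 0 <= qbin Q n j.
Proof.
  intros HQ. induction n; destruct j; simpl; try lra.
  apply Rplus_le_le_0_compat; auto. apply Rmult_le_pos; auto. apply pow_le; auto.
Qed.

Lemma qbin_bound Q n j : 0 < Q < 1 -> qbin Q n j <= / Lb Q.
Proof.
  intros HQ. destruct (Compare_dec.le_lt_dec j n) as [Hj|Hj].
  - assert (E := qbin_closed Q HQ n j Hj).
    assert (P1 := qpQ_pos Q j HQ). assert (P2 := qpQ_pos Q (n - j) HQ).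
    assert (D := qpQ_decr Q j n HQ Hj). assert (L := qpQ_lower Q (n - j) HQ).
    assert (Hl := Lb_pos Q). assert (Hb := qbin_nonneg Q ltac:(lra) n j).
    assert (qbin Q n j * qpoch Q Q (n - j) <= 1).
    { apply (Rmult_le_reg_r (qpoch Q Q j)); auto. nra. }
    apply (Rmult_le_reg_r (Lb Q)); auto. rewrite Rinv_l by lra. nra.
  - rewrite qbin_gt by auto. left; apply Rinv_0_lt_compat, Lb_pos.
Qed.

Lemma qpoch_upper Q v N : 0 < Q < 1 -> Rabs (qpoch v Q N) <= exp (Rabs v / (1 - Q)).
Proof.
  intros HQ.
  assert (Hg : forall N, Rabs (qpoch v Q N) <= exp (Rabs v * (1 - Q ^ N) / (1 - Q))).
  { induction N0.
    - simpl. replace (Rabs v * (1 - 1) / (1 - Q)) with 0 by (field; lra). rewrite exp_0, Rabs_R1. lra.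
    - rewrite qpochS, Rabs_mult.
      assert (HQn : 0 < Q ^ N0 <= 1) by (split; [apply pow_lt; lra| apply pow_le1'; lra]).
      replace (Rabs v * (1 - Q ^ S N0) / (1 - Q)) with
        (Rabs v * (1 - Q ^ N0) / (1 - Q) + Rabs v * Q ^ N0) by (simpl; field; lra).
      rewrite exp_plus. apply Rmult_le_compat; try apply Rabs_pos; auto.
      eapply Rle_trans; [|apply exp_ineq1_le].
      eapply Rle_trans; [apply Rabs_triang|]. rewrite Rabs_R1, Rabs_Ropp, Rabs_mult.
      rewrite (Rabs_right (Q ^ N0)) by lra. lra. }
  eapply Rle_trans; [apply Hg|]. apply exp_le'.
  assert (HQn : 0 < Q ^ N <= 1) by (split; [apply pow_lt; lra| apply pow_le1'; lra]).
  unfold Rdiv. apply Rmult_le_compat_r; [left; apply Rinv_0_lt_compat; lra|].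
  assert (0 <= Rabs v) by apply Rabs_pos. nra.
Qed.

Definition Lq Q := real (Lim_seq (qpoch Q Q)).

Lemma Lq_lim Q : 0 < Q < 1 -> is_lim_seq (qpoch Q Q) (Lq Q) /\ Lb Q <= Lq Q.
Proof.
  intros HQ.
  assert (Ex : ex_lim_seq (qpoch Q Q)) by (apply ex_lim_seq_decr; intros n; apply qpQ_decr; auto).
  assert (H := Lim_seq_correct _ Ex).
  assert (Hfin : is_finite (Lim_seq (qpoch Q Q))).
  { assert (H1 := is_lim_seq_le (fun _ => Lb Q) (qpoch Q Q) (Lb Q) (Lim_seq (qpoch Q Q))
       (fun n => qpQ_lower Q n HQ) (is_lim_seq_const _) H).
    assert (H2 := is_lim_seq_le (qpoch Q Q) (fun _ => 1) (Lim_seq (qpoch Q Q)) 1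
       (fun n => Rle_trans _ _ _ (qpQ_decr Q 0 n HQ ltac:(lia)) (Rle_refl _)) H (is_lim_seq_const _)).
    destruct (Lim_seq (qpoch Q Q)); simpl in *; try reflexivity; tauto. }
  unfold Lq. rewrite <- Hfin in H. split; auto.
  assert (H1 := is_lim_seq_le (fun _ => Lb Q) (qpoch Q Q) (Lb Q) _
       (fun n => qpQ_lower Q n HQ) (is_lim_seq_const _) H). simpl in H1. auto.
Qed.

Lemma qbin_lim Q j : 0 < Q < 1 -> is_lim_seq (fun n => qbin Q n j) (/ qpoch Q Q j).
Proof.
  intros HQ. destruct (Lq_lim Q HQ) as [HL HLb]. assert (Hl := Lb_pos Q).
  assert (P1 := qpQ_pos Q j HQ).
  apply (is_lim_seq_incr_n _ j).
  apply is_lim_seq_ext with (fun m => qpoch Q Q (m + j) / (qpoch Q Q j * qpoch Q Q m)).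
  { intros m. assert (E := qbin_closed Q HQ (m + j) j ltac:(lia)).
    replace (m + j - j)%nat with m in E by lia. assert (P2 := qpQ_pos Q m HQ).
    rewrite <- E. field. lra. }
  replace (/ qpoch Q Q j) with (Lq Q / (qpoch Q Q j * Lq Q)) by (field; lra).
  apply is_lim_seq_div'.
  - apply (is_lim_seq_incr_n (qpoch Q Q) j). auto.
  - apply is_lim_seq_mult'; auto. apply is_lim_seq_const.
  - apply Rgt_not_eq. apply Rmult_lt_0_compat; lra.
Qed.

Lemma series_lim a : ex_series a -> is_lim_seq (fun n => sum_f_R0 a n) (Series a).
Proof.
  intros H. apply Series_correct in H.
  apply is_lim_seq_ext with (sum_n a). { intros n; apply sum_n_Reals. } exact H.
Qed.

Lemma Series_nonneg a : (forall n, 0 <= a n) -> ex_series a -> 0 <= Series a.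
Proof.
  intros Hp H. assert (L := series_lim a H).
  assert (H1 := is_lim_seq_le (fun _ => 0) (fun n => sum_f_R0 a n) 0 (Series a)
     (fun n => cond_pos_sum a n Hp) (is_lim_seq_const _) L). simpl in H1. auto.
Qed.

Lemma partial_le_series g : (forall n, 0 <= g n) -> ex_series g -> forall n, sum_f_R0 g n <= Series g.
Proof.
  intros Hp Hex n.
  assert (0 <= Series (fun k => g (S n + k)%nat)).
  { apply Series_nonneg; auto. apply (ex_series_incr_n g (S n)). auto. }
  rewrite (Series_incr_n g (S n)) by (auto || lia). change (pred (S n)) with n. lra.
Qed.

Lemma tail_eq a K : ex_series a -> Series a - sum_f_R0 a K = Series (fun k => a (S K + k)%nat).
Proof. intros H. rewrite (Series_incr_n a (S K)) by (auto || lia). change (pred (S K)) with K. ring. Qed.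

Lemma tail_lim g : ex_series g -> is_lim_seq (fun K => Series g - sum_f_R0 g K) 0.
Proof.
  intros H. replace 0 with (Series g - Series g) by ring.
  apply is_lim_seq_minus'; [apply is_lim_seq_const| apply series_lim; auto].
Qed.

Lemma sum_diff_bound f g K n : (K <= n)%nat -> (forall j, Rabs (f j) <= g j) ->
  Rabs (sum_f_R0 f n - sum_f_R0 f K) <= sum_f_R0 g n - sum_f_R0 g K.
Proof.
  intros Hk Hb. induction Hk.
  - rewrite !Rminus_diag, Rabs_R0. lra.
  - simpl. replace (sum_f_R0 f m + f (S m) - sum_f_R0 f K) with ((sum_f_R0 f m - sum_f_R0 f K) + f (S m)) by ring.
    eapply Rle_trans; [apply Rabs_triang|]. specialize (Hb (S m)). lra.
Qed.

Lemma finite_sum_lim (f : nat -> nat -> R) (F : nat -> R) :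
  (forall j, is_lim_seq (fun n => f n j) (F j)) ->
  forall K, is_lim_seq (fun n => sum_f_R0 (f n) K) (sum_f_R0 F K).
Proof.
  intros H K. induction K; simpl; auto.
  apply is_lim_seq_plus'; auto.
Qed.

Lemma tannery (f : nat -> nat -> R) (F g : nat -> R) :
  (forall j, is_lim_seq (fun n => f n j) (F j)) ->
  (forall n j, Rabs (f n j) <= g j) ->
  ex_series g ->
  is_lim_seq (fun n => sum_f_R0 (f n) n) (Series F).
Proof.
  intros Hl Hb Hg.
  assert (HF : forall j, Rabs (F j) <= g j).
  { intros j. assert (A := is_lim_seq_abs _ _ (Hl j)).
    assert (B := is_lim_seq_le _ (fun _ => g j) _ _ (fun n => Hb n j) A (is_lim_seq_const _)). simpl in B. auto. }
  assert (Hg0 : forall j, 0 <= g j) by (intros j; eapply Rle_trans; [apply Rabs_pos| apply HF]).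
  assert (HexF : ex_series F).
  { apply ex_series_Rabs. apply (ex_series_le (fun n => Rabs (F n)) g); auto.
    intros n. unfold norm; simpl. unfold abs; simpl. rewrite Rabs_Rabsolu. auto. }
  apply is_lim_seq_spec. intros eps.
  assert (He3 : 0 < eps / 3) by (destruct eps; simpl; lra).
  destruct (proj2 (is_lim_seq_spec _ _) (tail_lim g Hg) (mkposreal _ He3)) as [K HK].
  specialize (HK K (le_n K)). simpl in HK. rewrite Rminus_0_r, Rabs_right in HK.
  2:{ apply Rle_ge. assert (X := partial_le_series g Hg0 Hg K). lra. }
  destruct (proj2 (is_lim_seq_spec _ _) (finite_sum_lim f F Hl K) (mkposreal _ He3)) as [N1 HN1].
  exists (max K N1). intros n Hn.
  specialize (HN1 n ltac:(lia)). simpl in HN1.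
  assert (B1 := sum_diff_bound (f n) g K n ltac:(lia) (Hb n)).
  assert (B2 := partial_le_series g Hg0 Hg n).
  assert (B3 : Rabs (Series F - sum_f_R0 F K) <= Series g - sum_f_R0 g K).
  { rewrite !tail_eq by auto.
    eapply Rle_trans; [apply Series_Rabs|].
    - apply (ex_series_le (fun k => Rabs (F (S K + k)%nat)) (fun k => g (S K + k)%nat)).
      + intros k. unfold norm; simpl. unfold abs; simpl. rewrite Rabs_Rabsolu. auto.
      + apply (ex_series_incr_n g (S K)). auto.
    - apply Series_le; [intros k; split; [apply Rabs_pos| apply HF]|].
      apply (ex_series_incr_n g (S K)). auto. }
  replace (sum_f_R0 (f n) n - Series F) with
    ((sum_f_R0 (f n) K - sum_f_R0 F K) + (sum_f_R0 (f n) n - sum_f_R0 (f n) K) - (Series F - sum_f_R0 F K)) by ring.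
  eapply Rle_lt_trans; [apply Rabs_triang|].
  rewrite Rabs_Ropp.
  eapply Rle_lt_trans; [apply Rplus_le_compat_r; apply Rabs_triang|].
  destruct eps as [e He]. simpl in *. lra.
Qed.

Lemma ex_series_tt Q T : 0 < Q < 1 -> 0 <= T -> ex_series (fun j => tt Q j * T ^ j).
Proof.
  intros HQ HT.
  set (T' := T + 1).
  assert (HT' : 0 < T') by (unfold T'; lra).
  assert (Hex : ex_series (fun j => Rabs (tt Q j * T' ^ j))).
  { apply ex_series_DAlembert with 0; [lra| |].
    - intros n. apply Rgt_not_eq. apply Rmult_lt_0_compat; [apply tt_pos; lra| apply pow_lt; lra].
    - apply is_lim_seq_ext with (fun n => T' * Q ^ n).
      + intros n. simpl tt. simpl pow.
        assert (0 < tt Q n) by (apply tt_pos; lra). assert (0 < T' ^ n) by (apply pow_lt; lra).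
        assert (0 < Q ^ n) by (apply pow_lt; lra).
        replace (tt Q n * Q ^ n * (T' * T' ^ n) / (tt Q n * T' ^ n)) with (T' * Q ^ n) by (field; lra).
        rewrite Rabs_right; [reflexivity|]. apply Rle_ge. apply Rmult_le_pos; lra.
      + replace 0 with (T' * 0) by ring. apply (is_lim_seq_scal_l _ T' 0).
        apply is_lim_seq_geom. rewrite Rabs_right; lra. }
  apply ex_series_Rabs.
  apply (ex_series_le (fun j => Rabs (tt Q j * T ^ j)) (fun j => Rabs (tt Q j * T' ^ j))); auto.
  intros n. unfold norm; simpl. unfold abs; simpl. rewrite Rabs_Rabsolu.
  assert (0 < tt Q n) by (apply tt_pos; lra).
  rewrite !Rabs_mult, !Rabs_right by (apply Rle_ge; first [apply pow_le; lra | lra]).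
  apply Rmult_le_compat_l; [lra|]. apply pow_incr. unfold T'; lra.
Qed.

Definition Eterm Q t j := tt Q j * t ^ j / qpoch Q Q j.
Definition Eser Q t := Series (Eterm Q t).

Lemma euler Q t : 0 < Q < 1 -> is_lim_seq (qpoch (- t) Q) (Eser Q t).
Proof.
  intros HQ. unfold Eser.
  apply is_lim_seq_ext with (fun n => sum_f_R0 (fun j => qbin Q n j * tt Q j * t ^ j) n).
  { intros n. rewrite Rothe_R. apply sum_eq. intros; f_equal. f_equal. ring. }
  apply tannery with (g := fun j => tt Q j * Rabs t ^ j * / Lb Q).
  - intros j. unfold Eterm. replace (tt Q j * t ^ j / qpoch Q Q j) with (/ qpoch Q Q j * (tt Q j * t ^ j)) by (unfold Rdiv; ring).
    apply is_lim_seq_ext with (fun n => qbin Q n j * (tt Q j * t ^ j)); [intros; ring|].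
    apply (is_lim_seq_scal_r _ (tt Q j * t ^ j) (/ qpoch Q Q j)). apply qbin_lim; auto.
  - intros n j. assert (0 < tt Q j) by (apply tt_pos; lra).
    assert (B := qbin_bound Q n j HQ). assert (B0 := qbin_nonneg Q ltac:(lra) n j).
    rewrite !Rabs_mult, Rabs_right by lra. rewrite (Rabs_right (tt Q j)) by lra. rewrite <- RPow_abs.
    assert (0 <= Rabs t ^ j) by (apply pow_le, Rabs_pos).
    replace (tt Q j * Rabs t ^ j * / Lb Q) with (/ Lb Q * (tt Q j * Rabs t ^ j)) by ring.
    rewrite Rmult_assoc. apply Rmult_le_compat_r; [nra| auto].
  - apply ex_series_scal_r. apply ex_series_tt; auto. apply Rabs_pos.
Qed.

Lemma qpoch_inf_eq Q t : 0 < Q < 1 -> qpoch_inf (- t) Q = Eser Q t.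
Proof. intros HQ. unfold qpoch_inf. rewrite (is_lim_seq_unique (fun n => qpoch (- t) Q n) _ (euler Q t HQ)). reflexivity. Qed.

Lemma qpoch_split v Q y N : qpoch v Q (y + N) = qpoch v Q y * qpoch (v * Q ^ y) Q N.
Proof.
  induction N.
  - rewrite Nat.add_0_r. simpl. ring.
  - rewrite Nat.add_succ_r, !qpochS, IHN, pow_add. ring.
Qed.

Lemma Eser_split Q t y : 0 < Q < 1 -> Eser Q t = qpoch (- t) Q y * Eser Q (t * Q ^ y).
Proof.
  intros HQ.
  assert (H1 := proj1 (is_lim_seq_incr_n (qpoch (- t) Q) y (Eser Q t)) (euler Q t HQ)).
  assert (H2 : is_lim_seq (fun n => qpoch (- t) Q (n + y)) (qpoch (- t) Q y * Eser Q (t * Q ^ y))).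
  { apply is_lim_seq_ext with (fun n => qpoch (- t) Q y * qpoch (- (t * Q ^ y)) Q n).
    - intros n. rewrite Nat.add_comm, qpoch_split. f_equal. f_equal. ring.
    - apply (is_lim_seq_scal_l _ _ (Eser Q (t * Q ^ y))). apply euler; auto. }
  apply is_lim_seq_unique in H1. apply is_lim_seq_unique in H2. rewrite H1 in H2. injection H2. auto.
Qed.

Lemma Eser_lower Q s : 0 < Q < 1 -> Rabs s <= Q -> exp (- Rabs s / (1 - Q) ^ 2) <= Eser Q s.
Proof.
  intros HQ Hs.
  assert (B := is_lim_seq_le (fun _ => exp (- Rabs s / (1 - Q) ^ 2)) (qpoch (- s) Q) _ _
    (qpoch_lower Q s HQ Hs) (is_lim_seq_const _) (euler Q s HQ)). simpl in B. auto.
Qed.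

Lemma qpoch_nonzero v Q y : (forall i, 1 - v * Q ^ i <> 0) -> qpoch v Q y <> 0.
Proof.
  intros H. induction y; simpl; [lra|]. apply Rmult_integral_contrapositive_currified; auto.
Qed.

Lemma Eser_nonzero Q t : 0 < Q < 1 -> (forall i, 1 + t * Q ^ i <> 0) -> Eser Q t <> 0.
Proof.
  intros HQ Ht.
  assert (He : 0 < Q / (Rabs t + 1)) by (apply Rdiv_lt_0_compat; [lra| assert (0 <= Rabs t) by apply Rabs_pos; lra]).
  destruct (proj2 (is_lim_seq_spec _ _) (is_lim_seq_geom Q ltac:(rewrite Rabs_right; lra)) (mkposreal _ He)) as [y Hy].
  specialize (Hy y (le_n y)). simpl in Hy. rewrite Rminus_0_r, Rabs_right in Hy by (apply Rle_ge, pow_le; lra).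
  rewrite (Eser_split Q t y HQ).
  apply Rmult_integral_contrapositive_currified.
  - apply qpoch_nonzero. intros i. specialize (Ht i). lra.
  - assert (Hs : Rabs (t * Q ^ y) <= Q).
    { rewrite Rabs_mult, (Rabs_right (Q ^ y)) by (apply Rle_ge, pow_le; lra).
      assert (0 <= Rabs t) by apply Rabs_pos.
      assert (Q ^ y * (Rabs t + 1) < Q) by (apply (Rmult_lt_reg_r (/ (Rabs t + 1))); [apply Rinv_0_lt_compat; lra|];
        replace (Q ^ y * (Rabs t + 1) * / (Rabs t + 1)) with (Q ^ y) by (field; lra); exact Hy).
      assert (0 <= Q ^ y) by (apply pow_le; lra). nra. }
    assert (L := Eser_lower Q (t * Q ^ y) HQ Hs). assert (P := exp_pos (- Rabs (t * Q ^ y) / (1 - Q) ^ 2)). lra.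
Qed.

Lemma sum_zero f n : (forall k, (k <= n)%nat -> f k = 0) -> sum_f_R0 f n = 0.
Proof. induction n; intros H; simpl. apply H; lia. rewrite IHn by (intros; apply H; lia). rewrite H by lia. ring. Qed.

Lemma sum_last_only F n : (forall j, (j < n)%nat -> F j = 0) -> sum_f_R0 F n = F n.
Proof.
  intros H. destruct n; [reflexivity|]. rewrite tech5. rewrite sum_zero by (intros; apply H; lia). ring.
Qed.

Lemma is_series_ext_R (u v : nat -> R) l : (forall n, u n = v n) -> is_series u l -> is_series v l.
Proof. intros H. apply is_series_ext. exact H. Qed.

Lemma is_series_lim_R (u : nat -> R) l : is_series u l <-> is_lim_seq (fun n => sum_f_R0 u n) l.
Proof.
  split; intros H.
  - apply is_lim_seq_ext with (sum_n u). { intros n; apply sum_n_Reals. } exact H.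
  - assert (H' : is_lim_seq (sum_n u) l) by (apply is_lim_seq_ext with (fun n => sum_f_R0 u n); [intros n; symmetry; apply sum_n_Reals| exact H]).
    exact H'.
Qed.

Lemma is_series_shift_R (u : nat -> R) l K : (forall n, (n < K)%nat -> u n = 0) ->
  is_series (fun m => u (K + m)%nat) l -> is_series u l.
Proof.
  intros Hz H. apply is_series_lim_R in H. apply is_series_lim_R.
  apply (is_lim_seq_incr_n _ K).
  apply is_lim_seq_ext with (fun n => sum_f_R0 (fun m => u (K + m)%nat) n); auto.
  intros n. induction n.
  - simpl. rewrite Nat.add_0_r. symmetry. apply sum_last_only. auto.
  - replace (S n + K)%nat with (S (n + K)) by lia. simpl. rewrite IHn. f_equal. f_equal. lia.
Qed.

Lemma is_series_scal_R (u : nat -> R) l k : is_series u l -> is_series (fun n => k * u n) (k * l).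
Proof. intros H. exact (is_series_scal_l (K := R_AbsRing) (V := R_NormedModule) k u l H). Qed.

Lemma is_series_plus_R (u v : nat -> R) l1 l2 : is_series u l1 -> is_series v l2 -> is_series (fun n => u n + v n) (l1 + l2).
Proof. intros H1 H2. exact (is_series_plus (K := R_AbsRing) (V := R_NormedModule) u v l1 l2 H1 H2). Qed.

Lemma is_series_fsum (u : nat -> nat -> R) (l : nat -> R) (al : nat -> R) K :
  (forall k, (k <= K)%nat -> is_series (u k) (l k)) ->
  is_series (fun n => sum_f_R0 (fun k => al k * u k n) K) (sum_f_R0 (fun k => al k * l k) K).
Proof.
  induction K; intros H.
  - simpl. apply is_series_scal_R. apply H; lia.
  - simpl. apply is_series_plus_R.
    + apply IHK. intros; apply H; lia.
    + apply is_series_scal_R. apply H; lia.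
Qed.

Lemma ex_Eterm Q t : 0 < Q < 1 -> ex_series (Eterm Q t).
Proof.
  intros HQ. apply ex_series_Rabs.
  apply (ex_series_le (fun j => Rabs (Eterm Q t j)) (fun j => tt Q j * Rabs t ^ j * / Lb Q)).
  - intros n. unfold norm; simpl. unfold abs; simpl. rewrite Rabs_Rabsolu. unfold Eterm.
    assert (0 < tt Q n) by (apply tt_pos; lra). assert (P := qpQ_pos Q n HQ).
    assert (L := qpQ_lower Q n HQ). assert (Hl := Lb_pos Q).
    unfold Rdiv. rewrite !Rabs_mult, (Rabs_right (tt Q n)) by lra. rewrite <- RPow_abs.
    rewrite (Rabs_right (/ qpoch Q Q n)) by (apply Rle_ge; left; apply Rinv_0_lt_compat; lra).
    assert (0 <= Rabs t ^ n) by (apply pow_le, Rabs_pos).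
    apply Rmult_le_compat_l; [nra|]. apply Rinv_le_contravar; lra.
  - apply ex_series_scal_r. apply ex_series_tt; auto. apply Rabs_pos.
Qed.

Lemma is_Eterm Q t : 0 < Q < 1 -> is_series (Eterm Q t) (Eser Q t).
Proof. intros HQ. apply Series_correct. apply ex_Eterm; auto. Qed.

Section Charlier.
Variables (Q c : R) (y : nat).
Hypothesis HQ : 0 < Q < 1.
Hypothesis Hc : 0 < c.
Let p := / Q.
Let a := / c.
Let z := - (Q * (c * Q ^ y)).

Definition ww n := a ^ n * tt Q n / qpoch Q Q n.
Definition ff n := phi21_trunc (p ^ y) (p ^ n) 0 Q z n.
Definition al k := qpoch (p ^ y) Q k / qpoch Q Q k * z ^ k.
Definition be j := sum_f_R0 (fun k => al k * qbin Q k j * tt Q j * (-1) ^ j) y.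

Lemma pQ n : p ^ n * Q ^ n = 1.
Proof. unfold p. apply powpQ. lra. Qed.

Lemma ff_al n : ff n = sum_f_R0 (fun k => al k * qpoch (p ^ n) Q k) y.
Proof.
  unfold ff, phi21_trunc.
  transitivity (sum_f_R0 (fun k => al k * qpoch (p ^ n) Q k) n).
  { apply sum_eq. intros k _. unfold phi21_term, al. rewrite qpoch_0.
    assert (P := qpQ_pos Q k HQ). field. lra. }
  assert (Z : forall k, (max n y < k)%nat -> al k * qpoch (p ^ n) Q k = 0).
  { intros k Hk. unfold p. rewrite (qpoch_zero_y Q n k) by (lra || lia). ring. }
  assert (Zy : forall k, (y < k)%nat -> al k * qpoch (p ^ n) Q k = 0).
  { intros k Hk. unfold al, p. rewrite (qpoch_zero_y Q y k) by (lra || lia). unfold Rdiv. ring. }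
  assert (Zn : forall k, (n < k)%nat -> al k * qpoch (p ^ n) Q k = 0).
  { intros k Hk. unfold p. rewrite (qpoch_zero_y Q n k) by (lra || lia). ring. }
  rewrite <- (sum_extend _ n (max n y)) by (auto; lia).
  rewrite <- (sum_extend _ y (max n y)) by (auto; lia). reflexivity.
Qed.

Lemma ff_be n : ff n = sum_f_R0 (fun j => be j * (p ^ j) ^ n) y.
Proof.
  rewrite ff_al. unfold be.
  transitivity (sum_f_R0 (fun k => sum_f_R0 (fun j => al k * qbin Q k j * tt Q j * (-1) ^ j * (p ^ j) ^ n) y) y).
  - apply sum_eq. intros k Hk. rewrite Rothe_R. rewrite <- sum_scal_l.
    rewrite (sum_extend _ k y) by (auto; intros j Hj; rewrite qbin_gt by lia; ring).
    apply sum_eq. intros j Hj.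
    replace ((- p ^ n) ^ j) with ((-1) ^ j * (p ^ j) ^ n) by (replace (- p ^ n) with (-1 * p ^ n) by ring; rewrite Rpow_mult_distr, <- !pow_mult, Nat.mul_comm; reflexivity).
    ring.
  - rewrite sum_swap. apply sum_eq. intros j Hj. rewrite Rmult_comm, scal_sum. apply sum_eq. intros; ring.
Qed.

Lemma be_y : be y = al y * tt Q y * (-1) ^ y.
Proof.
  unfold be. rewrite sum_last_only by (intros k Hk; rewrite qbin_gt by lia; ring).
  rewrite qbin_nn. ring.
Qed.

Lemma bracket k m : tt Q k * tt Q k * Q ^ (k * m) * (p ^ (k + m)) ^ k = p ^ k.
Proof.
  assert (T := tt_sq Q k).
  assert (T' : tt Q k * tt Q k = Q ^ (k * k) * p ^ k).
  { transitivity (tt Q k * tt Q k * Q ^ k * p ^ k); [|rewrite T; ring].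
    rewrite Rmult_assoc, (Rmult_comm (Q ^ k)), pQ. ring. }
  rewrite T'. rewrite <- pow_mult. replace ((k + m) * k)%nat with (k * k + k * m)%nat by lia.
  rewrite pow_add.
  transitivity (p ^ k * (p ^ (k * k) * Q ^ (k * k)) * (p ^ (k * m) * Q ^ (k * m))); [ring|].
  rewrite !pQ. ring.
Qed.

Lemma Tjk j k : is_series (fun n => ww n * (p ^ j) ^ n * qpoch (p ^ n) Q k)
  ((- a) ^ k * p ^ k * (p ^ j) ^ k * Eser Q (a * p ^ j)).
Proof.
  assert (Hshift : forall m, ww (k + m) * (p ^ j) ^ (k + m) * qpoch (p ^ (k + m)) Q k =
                   ((- a) ^ k * p ^ k * (p ^ j) ^ k) * Eterm Q (a * p ^ j) m).
  { intros m. unfold ww, Eterm.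
    assert (E := Pn_id Q HQ (k + m) k ltac:(lia)). replace (k + m - k)%nat with m in E by lia.
    fold p in E.
    assert (P1 := qpQ_pos Q m HQ). assert (P2 := qpQ_pos Q (k + m) HQ).
    replace (qpoch (p ^ (k + m)) Q k) with ((-1) ^ k * tt Q k * (p ^ (k + m)) ^ k * qpoch Q Q (k + m) / qpoch Q Q m)
      by (rewrite <- E; field; lra).
    rewrite tt_add. assert (B := bracket k m).
    replace ((- a) ^ k) with ((-1) ^ k * a ^ k) by (rewrite <- Rpow_mult_distr; f_equal; ring).
    rewrite (pow_add a k m), (pow_add (p ^ j) k m), Rpow_mult_distr. rewrite <- B. field. lra. }
  destruct k as [|k'].
  - apply is_series_ext_R with (Eterm Q (a * p ^ j)).
    + intros n. unfold ww, Eterm. simpl qpoch. rewrite Rpow_mult_distr. unfold Rdiv. ring.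
    + replace ((- a) ^ 0 * p ^ 0 * (p ^ j) ^ 0 * Eser Q (a * p ^ j)) with (Eser Q (a * p ^ j)) by (simpl; ring).
      apply is_Eterm; auto.
  - apply is_series_shift_R with (S k').
    { intros i Hi. unfold p. rewrite (qpoch_zero_y Q i (S k')) by (lra || lia). ring. }
    apply is_series_ext_R with (fun m => ((- a) ^ S k' * p ^ S k' * (p ^ j) ^ S k') * Eterm Q (a * p ^ j) m).
    + intros m. rewrite Hshift. reflexivity.
    + apply is_series_scal_R. apply is_Eterm; auto.
Qed.

Lemma F6 u : sum_f_R0 (fun k => qpoch (p ^ y) Q k / qpoch Q Q k * u ^ k) y = qpoch (p ^ y * u) Q y.
Proof.
  rewrite Rothe_R. apply sum_eq. intros k Hk.
  assert (E := Pn_id Q HQ y k Hk). fold p in E.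
  assert (E1 := qbin_closed Q HQ y k Hk).
  assert (P1 := qpQ_pos Q k HQ). assert (P2 := qpQ_pos Q (y - k) HQ).
  replace (qpoch (p ^ y) Q k) with ((-1) ^ k * tt Q k * (p ^ y) ^ k * qpoch Q Q y / qpoch Q Q (y - k))
      by (rewrite <- E; field; lra).
  rewrite <- E1. replace (- (p ^ y * u)) with (-1 * (p ^ y * u)) by ring.
  rewrite !Rpow_mult_distr. field. lra.
Qed.

Lemma Sj j : (j <= y)%nat -> is_series (fun n => ww n * (p ^ j) ^ n * ff n)
  (Eser Q (a * p ^ j) * qpoch (p ^ j) Q y).
Proof.
  intros Hj.
  apply is_series_ext_R with (fun n => sum_f_R0 (fun k => al k * (ww n * (p ^ j) ^ n * qpoch (p ^ n) Q k)) y).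
  { intros n. rewrite ff_al. rewrite <- sum_scal_l. apply sum_eq. intros; ring. }
  replace (Eser Q (a * p ^ j) * qpoch (p ^ j) Q y) with
    (sum_f_R0 (fun k => al k * ((- a) ^ k * p ^ k * (p ^ j) ^ k * Eser Q (a * p ^ j))) y).
  { apply is_series_fsum with (u := fun k n => ww n * (p ^ j) ^ n * qpoch (p ^ n) Q k).
    intros k _. apply Tjk. }
  transitivity (Eser Q (a * p ^ j) * sum_f_R0 (fun k => qpoch (p ^ y) Q k / qpoch Q Q k * (Q ^ y * p ^ j) ^ k) y).
  { rewrite <- sum_scal_l. apply sum_eq. intros k _. unfold al, z, a.
    replace ((Q ^ y * p ^ j) ^ k) with ((- (Q * (c * Q ^ y))) ^ k * (- / c) ^ k * p ^ k * (p ^ j) ^ k).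
    - ring.
    - rewrite <- !Rpow_mult_distr. f_equal. unfold p. field. lra. }
  rewrite F6. f_equal. f_equal.
  transitivity ((p ^ y * Q ^ y) * p ^ j); [ring| rewrite pQ; ring].
Qed.

Lemma qpoch_pj_zero j : (j < y)%nat -> qpoch (p ^ j) Q y = 0.
Proof. intros H. unfold p. apply qpoch_zero_y; [lra| auto]. Qed.

Lemma qpoch_front v n : qpoch v Q (S n) = (1 - v) * qpoch (v * Q) Q n.
Proof.
  induction n.
  - simpl. ring.
  - rewrite qpochS, IHn, qpochS. simpl. ring.
Qed.

Lemma PP_id m : c ^ m * tt Q m * qpoch (- (a * p ^ m)) Q m = p ^ m * qpoch (- (c * Q)) Q m.
Proof.
  induction m.
  - simpl. ring.
  - rewrite qpoch_front.
    replace (- (a * p ^ S m) * Q) with (- (a * p ^ m)) by (simpl; unfold p; field; lra).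
    rewrite qpochS. simpl tt.
    transitivity ((c ^ m * tt Q m * qpoch (- (a * p ^ m)) Q m) * (c * Q ^ m * (1 - - (a * p ^ S m)))); [simpl; ring|].
    rewrite IHm.
    replace (c * Q ^ m * (1 - - (a * p ^ S m))) with (p * (1 - - (c * Q) * Q ^ m)).
    + simpl. ring.
    + assert (H1 := pQ m). unfold a. simpl pow.
      transitivity (p + c * Q * Q ^ m * p); [ring|].
      transitivity (c * Q ^ m + c * / c * p * (p ^ m * Q ^ m)); [|ring].
      rewrite H1. unfold p. field. split; lra.
Qed.

Theorem charlier_norm :
  is_series (fun n => ww n * ff n ^ 2) (p ^ y * qpoch Q Q y * qpoch (- (c * Q)) Q y * Eser Q a).
Proof.
  apply is_series_ext_R with (fun n => sum_f_R0 (fun j => be j * (ww n * (p ^ j) ^ n * ff n)) y).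
  { intros n.
    transitivity (ww n * ff n * sum_f_R0 (fun j => be j * (p ^ j) ^ n) y).
    - rewrite <- sum_scal_l. apply sum_eq. intros; ring.
    - rewrite <- ff_be. ring. }
  replace (p ^ y * qpoch Q Q y * qpoch (- (c * Q)) Q y * Eser Q a) with
    (sum_f_R0 (fun j => be j * (Eser Q (a * p ^ j) * qpoch (p ^ j) Q y)) y).
  { apply is_series_fsum with (u := fun j n => ww n * (p ^ j) ^ n * ff n). intros j Hj. apply Sj; auto. }
  rewrite sum_last_only by (intros j Hj; rewrite qpoch_pj_zero by lia; ring).
  rewrite be_y.
    rewrite (Eser_split Q (a * p ^ y) y HQ).
    replace (a * p ^ y * Q ^ y) with a by (rewrite Rmult_assoc, pQ; ring).
    assert (PPy := PP_id y).
    assert (E := Pn_id Q HQ y y (le_n y)). fold p in E. rewrite Nat.sub_diag in E. simpl qpoch in E at 2.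
    rewrite Rmult_1_r in E.
    unfold al. rewrite E.
    assert (P1 := qpQ_pos Q y HQ).
    assert (T := tt_sq Q y).
    unfold z.
    replace ((- (Q * (c * Q ^ y))) ^ y) with ((-1) ^ y * (Q ^ y * (c ^ y * (Q ^ y) ^ y))) by
      (rewrite <- !Rpow_mult_distr; f_equal; ring).
    assert (Hm1 : (-1) ^ y * (-1) ^ y = 1)
      by (rewrite <- Rpow_mult_distr; replace (-1 * -1) with 1 by ring; apply pow1).
    assert (Hpp : (p ^ y) ^ y * (Q ^ y) ^ y = 1) by (rewrite <- Rpow_mult_distr, pQ; apply pow1).
    transitivity (((-1) ^ y * (-1) ^ y) * ((-1) ^ y * (-1) ^ y) * ((p ^ y) ^ y * (Q ^ y) ^ y) * (tt Q y * tt Q y * Q ^ y) * (p ^ y) ^ y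
       * qpoch Q Q y * (c ^ y * tt Q y * qpoch (- (a * p ^ y)) Q y) * Eser Q a).
    + field. lra.
    + rewrite Hm1, Hpp, T, PPy. rewrite <- pow_mult.
      transitivity (p ^ y * qpoch Q Q y * qpoch (- (c * Q)) Q y * Eser Q a * (Q ^ (y * y) * p ^ (y * y))); [ring|].
      rewrite Rmult_comm with (r1 := Q ^ (y * y)), pQ. ring.
Qed.

End Charlier.

Lemma ex_series_ext_R (u v : nat -> R) : (forall n, u n = v n) -> ex_series u -> ex_series v.
Proof. intros H. apply ex_series_ext. exact H. Qed.

Lemma Rpi_gen c Q al m : al <> 0 -> Rpi c Q al m = al ^ m * qpoch (c * / al) Q m.
Proof.
  intros H. induction m; simpl; [ring|]. rewrite IHm. field. auto.
Qed.

Lemma G_lim c Q al : 0 < Q < 1 -> al <> 0 ->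
  is_lim_seq (fun n => Rr c Q n al / al ^ n) (Eser Q (/ al) * Eser Q (- (c * / al))).
Proof.
  intros HQ Hal. set (u := / al).
  apply is_lim_seq_ext with (fun n => sum_f_R0 (fun j => qbin Q n j * tt Q j * u ^ j * qpoch (c * u) Q (n - j)) n).
  { intros n. symmetry. unfold Rr. unfold Rdiv. rewrite Rmult_comm, <- sum_scal_l. apply sum_eq. intros j Hj.
    rewrite Rpi_gen by auto. unfold Acoef. fold u.
    replace (al ^ n) with (al ^ j * al ^ (n - j)) by (rewrite <- pow_add; f_equal; lia).
    unfold u. rewrite pow_inv. field. split; apply pow_nonzero; auto. }
  replace (Eser Q u * Eser Q (- (c * u))) with (Series (fun j => Eterm Q u j * Eser Q (- (c * u)))).
  2:{ rewrite Series_scal_r. reflexivity. }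
  apply tannery with (g := fun j => / Lb Q * (tt Q j * Rabs u ^ j) * exp (Rabs (c * u) / (1 - Q))).
  - intros j. apply (is_lim_seq_incr_n _ j).
    apply is_lim_seq_ext with (fun m => (qbin Q (m + j) j * (tt Q j * u ^ j)) * qpoch (- - (c * u)) Q m).
    { intros m. replace (m + j - j)%nat with m by lia. replace (- - (c * u)) with (c * u) by ring. ring. }
    unfold Eterm. replace (tt Q j * u ^ j / qpoch Q Q j) with (/ qpoch Q Q j * (tt Q j * u ^ j)) by (unfold Rdiv; ring).
    apply is_lim_seq_mult'.
    + apply (is_lim_seq_scal_r _ (tt Q j * u ^ j) (/ qpoch Q Q j)).
      apply (is_lim_seq_incr_n (fun n => qbin Q n j) j). apply qbin_lim; auto.
    + apply euler; auto.
  - intros n j. assert (0 < tt Q j) by (apply tt_pos; lra).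
    assert (B := qbin_bound Q n j HQ). assert (B0 := qbin_nonneg Q ltac:(lra) n j).
    assert (U := qpoch_upper Q (c * u) (n - j) HQ). rewrite (Rabs_mult c u) in U.
    rewrite !Rabs_mult, (Rabs_right (qbin Q n j)) by lra. rewrite (Rabs_right (tt Q j)) by lra. rewrite <- RPow_abs.
    assert (0 <= Rabs u ^ j) by (apply pow_le, Rabs_pos).
    assert (0 <= Rabs (qpoch (c * u) Q (n - j))) by apply Rabs_pos.
    replace (/ Lb Q * (tt Q j * Rabs u ^ j) * exp (Rabs (c * u) / (1 - Q))) with
      (/ Lb Q * (tt Q j * Rabs u ^ j) * exp (Rabs (c * u) / (1 - Q))) by ring.
    apply Rmult_le_compat; [repeat apply Rmult_le_pos; lra| auto| |auto].
    replace (qbin Q n j * tt Q j * Rabs u ^ j) with (qbin Q n j * (tt Q j * Rabs u ^ j)) by ring.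
    apply Rmult_le_compat_r; [nra| auto].
  - apply ex_series_scal_r. apply (ex_series_ext_R (fun j => (tt Q j * Rabs u ^ j) * / Lb Q)).
    { intros; ring. } apply ex_series_scal_r. apply ex_series_tt; auto. apply Rabs_pos.
Qed.

Lemma eventually_ge_pos (r : R) Q : 0 < Q < 1 -> 0 < r ->
  exists N0, forall n, (N0 <= n)%nat -> r ^ N0 / tt Q N0 <= r ^ n / tt Q n.
Proof.
  intros HQ Hr.
  destruct (proj2 (is_lim_seq_spec _ _) (is_lim_seq_geom Q ltac:(rewrite Rabs_right; lra)) (mkposreal _ Hr)) as [N0 HN].
  exists N0. intros n Hn. induction Hn; [lra|].
  specialize (HN m Hn). simpl in HN. rewrite Rminus_0_r, Rabs_right in HN by (apply Rle_ge, pow_le; lra).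
  eapply Rle_trans; [apply IHHn|]. simpl tt. simpl pow.
  assert (0 < tt Q m) by (apply tt_pos; lra). assert (0 < Q ^ m) by (apply pow_lt; lra).
  assert (0 < r ^ m) by (apply pow_lt; lra).
  replace (r * r ^ m / (tt Q m * Q ^ m)) with (r ^ m / tt Q m * (r / Q ^ m)) by (field; lra).
  assert (1 <= r / Q ^ m) by (apply (Rmult_le_reg_r (Q ^ m)); auto; unfold Rdiv; rewrite Rmult_assoc, Rinv_l; lra).
  assert (0 < r ^ m / tt Q m) by (apply Rdiv_lt_0_compat; auto). nra.
Qed.

Theorem real_not_l2 c Q al : 0 < Q < 1 -> 0 < c -> al <> 0 ->
  (forall i, al <> - Q ^ i) -> (forall i, al <> c * Q ^ i) ->
  ~ ex_series (fun n => Rr c Q n al ^ 2 / (c ^ n * tt Q n * qpoch Q Q n)).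
Proof.
  intros HQ Hc Hal H1 H2 Hex.
  set (L := Eser Q (/ al) * Eser Q (- (c * / al))).
  assert (HL : L <> 0).
  { unfold L. apply Rmult_integral_contrapositive_currified; apply Eser_nonzero; auto.
    - intros i Hi. apply (H1 i).
      assert (E : al * (1 + / al * Q ^ i) = al + Q ^ i) by (field; auto). rewrite Hi in E. lra.
    - intros i Hi. apply (H2 i).
      assert (E : al * (1 + - (c * / al) * Q ^ i) = al - c * Q ^ i) by (field; auto). rewrite Hi in E. lra. }
  assert (HL2 : 0 < Rabs L / 2) by (assert (0 < Rabs L) by (apply Rabs_pos_lt; auto); lra).
  destruct (proj2 (is_lim_seq_spec _ _) (G_lim c Q al HQ Hal) (mkposreal _ HL2)) as [N1 HN1].
  set (r := al ^ 2 / c).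
  assert (Hr : 0 < r) by (unfold r; apply Rdiv_lt_0_compat; [apply pow2_gt_0|]; auto).
  destruct (eventually_ge_pos r Q HQ Hr) as [N0 HN0].
  set (s0 := r ^ N0 / tt Q N0).
  assert (Hs0 : 0 < s0) by (unfold s0; apply Rdiv_lt_0_compat; [apply pow_lt; auto| apply tt_pos; lra]).
  set (d := (Rabs L / 2) ^ 2 * s0).
  assert (Hd : 0 < d) by (unfold d; apply Rmult_lt_0_compat; [apply pow_lt|]; lra).
  assert (Hl0 := ex_series_lim_0 _ Hex).
  destruct (proj2 (is_lim_seq_spec _ _) Hl0 (mkposreal _ Hd)) as [N2 HN2].
  set (n := max N0 (max N1 N2)).
  specialize (HN1 n ltac:(unfold n; lia)). specialize (HN2 n ltac:(unfold n; lia)).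
  specialize (HN0 n ltac:(unfold n; lia)). simpl in HN1, HN2.
  set (G := Rr c Q n al / al ^ n) in *.
  assert (HG : Rabs L / 2 <= Rabs G).
  { assert (Rabs L <= Rabs G + Rabs (G - L)).
    { replace L with (G - (G - L)) at 1 by ring. eapply Rle_trans; [apply Rabs_triang|]. rewrite Rabs_Ropp. lra. }
    fold L in HN1. lra. }
  assert (Ptt : 0 < tt Q n) by (apply tt_pos; lra).
  assert (PQn : 0 < qpoch Q Q n <= 1) by (split; [apply qpQ_pos; auto| apply (qpQ_decr Q 0 n HQ); lia]).
  assert (Pcn : 0 < c ^ n) by (apply pow_lt; auto).
  assert (Pal : 0 < al ^ 2) by (apply pow2_gt_0; auto).
  assert (Rr c Q n al = G * al ^ n) by (unfold G; field; apply pow_nonzero; auto).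
  assert (Hv : d <= Rr c Q n al ^ 2 / (c ^ n * tt Q n * qpoch Q Q n)).
  { rewrite H. unfold d.
    assert (E : (G * al ^ n) ^ 2 / (c ^ n * tt Q n * qpoch Q Q n) = G ^ 2 * (r ^ n / tt Q n) / qpoch Q Q n).
    { unfold r. replace ((al ^ 2 / c) ^ n) with ((al ^ n) ^ 2 / c ^ n)
        by (unfold Rdiv; rewrite Rpow_mult_distr, pow_inv, <- !pow_mult, Nat.mul_comm; reflexivity).
      field. lra. }
    rewrite E.
    assert (G2 : (Rabs L / 2) ^ 2 <= G ^ 2).
    { rewrite <- (pow2_abs G). apply pow_incr. lra. }
    assert (0 <= G ^ 2) by (apply pow2_ge_0).
    assert (Hs : s0 <= r ^ n / tt Q n) by exact HN0.
    assert (0 < r ^ n / tt Q n) by (apply Rdiv_lt_0_compat; [apply pow_lt|]; auto).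
    apply Rle_trans with (G ^ 2 * (r ^ n / tt Q n)).
    - apply Rmult_le_compat; try lra. apply pow2_ge_0.
    - unfold Rdiv at 2. rewrite <- (Rmult_1_r (G ^ 2 * (r ^ n / tt Q n))) at 1.
      apply Rmult_le_compat_l; [nra|]. rewrite <- Rinv_1. apply Rinv_le_contravar; lra. }
  rewrite Rminus_0_r in HN2. rewrite Rabs_right in HN2.
  - lra.
  - apply Rle_ge. apply Rdiv_le_0_compat; [apply pow2_ge_0|]. apply Rmult_lt_0_compat; [|lra]. nra.
Qed.

Definition Hn c Q n := c ^ n * tt Q n * qpoch Q Q n.

Lemma Hn_pos c Q n : 0 < Q < 1 -> 0 < c -> 0 < Hn c Q n.
Proof.
  intros HQ Hc. unfold Hn. apply Rmult_lt_0_compat; [apply Rmult_lt_0_compat|].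
  apply pow_lt; auto. apply tt_pos; lra. apply qpQ_pos; auto.
Qed.

Lemma Hn_S c Q m : Hn c Q (S m) = Hn c Q m * (Q ^ m * c * 1 * (1 - Q ^ S m)).
Proof. unfold Hn. simpl. ring. Qed.

Lemma RnP_0 c Q x : RnP c Q 0 x = RtoC 1.
Proof. unfold RnP, Acoef. simpl. apply injective_projections; simpl; ring. Qed.

Lemma RnP_1 c Q x : RnP c Q 1 x = Cminus x (RtoC (c - 1)).
Proof. unfold RnP, Acoef. simpl. apply injective_projections; simpl; ring. Qed.

Section Green.
Variables (c Q : R) (lam : C).
Hypothesis HQ : 0 < Q < 1.
Hypothesis Hc : 0 < c.
Let P n := RnP c Q n lam.
Let v n := Cmod (P n) ^ 2 / Hn c Q n.
Let W n := (Im (P (S n)) * Re (P n) - Re (P (S n)) * Im (P n)) / Hn c Q n.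

Lemma green n : Im lam * sum_f_R0 v n = W n.
Proof.
  assert (HP := Hn_pos c Q).
  induction n.
  - unfold v, W, P. simpl sum_f_R0. rewrite RnP_1, RnP_0. rewrite Cmod_1.
    unfold Hn, Im, Re. simpl. field.
  - rewrite tech5, Rmult_plus_distr_l, IHn. unfold W, v, P.
    rewrite (Rn_rec c Q lam n HQ).
    rewrite Cmod2_alt. rewrite Hn_S.
    assert (0 < Hn c Q n) by auto.
    assert (0 < Q ^ n * c * 1 * (1 - Q ^ S n)).
    { assert (0 < Q ^ S n < 1) by (split; [apply pow_lt; lra| destruct (pow_lt_1_compat Q (S n) ltac:(lra) ltac:(lia)); lra]).
      assert (0 < Q ^ n) by (apply pow_lt; lra). repeat apply Rmult_lt_0_compat; lra. }
    destruct (RnP c Q (S n) lam) as [x1 y1]. destruct (RnP c Q n lam) as [x0 y0].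
    unfold Re, Im. simpl in H0. simpl. field. assert (0 < Q ^ n) by (apply pow_lt; lra). assert (Q ^ n <= 1) by (apply pow_le1'; lra). assert (0 < 1 - Q * Q ^ n) by nra. repeat split; lra.
Qed.

Lemma W_bound n : W n ^ 2 <= c * (v (S n) * v n).
Proof.
  assert (HP := Hn_pos c Q).
  unfold W, v, P. rewrite !Cmod2_alt. rewrite Hn_S.
  set (h := Q ^ n * c * 1 * (1 - Q ^ S n)).
  assert (Hh : 0 < h <= c).
  { unfold h. assert (0 < Q ^ S n < 1) by (split; [apply pow_lt; lra| destruct (pow_lt_1_compat Q (S n) ltac:(lra) ltac:(lia)); lra]).
    assert (0 < Q ^ n <= 1) by (split; [apply pow_lt; lra| apply pow_le1'; lra]).
    assert (0 < Q ^ n * (1 - Q ^ S n) <= 1) by (split; [apply Rmult_lt_0_compat; lra| nra]).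
    replace (Q ^ n * c * 1 * (1 - Q ^ S n)) with (c * (Q ^ n * (1 - Q ^ S n))) by ring.
    split; [apply Rmult_lt_0_compat; lra| nra]. }
  assert (H0 : 0 < Hn c Q n) by auto.
  set (a1 := Re (RnP c Q (S n) lam)). set (b1 := Im (RnP c Q (S n) lam)).
  set (a0 := Re (RnP c Q n lam)). set (b0 := Im (RnP c Q n lam)).
  set (K := Hn c Q n) in *.
  assert (CS : (b1 * a0 - a1 * b0) ^ 2 <= (a1 ^ 2 + b1 ^ 2) * (a0 ^ 2 + b0 ^ 2)).
  { assert (0 <= (a1 * a0 + b1 * b0) ^ 2) by apply pow2_ge_0. nra. }
  assert (E1 : ((b1 * a0 - a1 * b0) / K) ^ 2 = (b1 * a0 - a1 * b0) ^ 2 / (K * K)) by (field; lra).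
  assert (E2 : c * ((a1 ^ 2 + b1 ^ 2) / (K * h) * ((a0 ^ 2 + b0 ^ 2) / K)) =
              (c / h) * ((a1 ^ 2 + b1 ^ 2) * (a0 ^ 2 + b0 ^ 2) / (K * K))) by (field; lra).
  rewrite E1, E2.
  assert (Hch : 1 <= c / h) by (apply (Rmult_le_reg_r h); [lra|]; unfold Rdiv; rewrite Rmult_assoc, Rinv_l; lra).
  assert (HKK : 0 < K * K) by nra.
  assert (X : (b1 * a0 - a1 * b0) ^ 2 / (K * K) <= (a1 ^ 2 + b1 ^ 2) * (a0 ^ 2 + b0 ^ 2) / (K * K)).
  { unfold Rdiv. apply Rmult_le_compat_r; [left; apply Rinv_0_lt_compat; lra| auto]. }
  assert (0 <= (a1 ^ 2 + b1 ^ 2) * (a0 ^ 2 + b0 ^ 2) / (K * K)).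
  { apply Rdiv_le_0_compat; [|lra]. apply Rmult_le_pos; nra. }
  nra.
Qed.

Theorem nonreal_not_l2 : Im lam <> 0 -> ~ ex_series v.
Proof.
  intros Hb Hex.
  assert (Hv0 : forall n, 0 <= v n).
  { intros n. unfold v. apply Rdiv_le_0_compat; [apply pow2_ge_0| apply Hn_pos; auto]. }
  set (Sv := Series v).
  assert (HS : 1 <= Sv).
  { assert (X := partial_le_series v Hv0 Hex 0). simpl sum_f_R0 in X.
    assert (E : v 0%nat = 1) by (unfold v, P; rewrite RnP_0, Cmod_1; unfold Hn; simpl; field).
    unfold Sv. lra. }
  assert (L1 : is_lim_seq W (Im lam * Sv)).
  { apply is_lim_seq_ext with (fun n => Im lam * sum_f_R0 v n). { intros; apply green. }
    apply (is_lim_seq_scal_l _ (Im lam) Sv). apply series_lim; auto. }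
  assert (L2 : is_lim_seq (fun n => W n ^ 2) ((Im lam * Sv) ^ 2)).
  { simpl. apply is_lim_seq_ext with (fun n => W n * (W n * 1)). { intros; simpl; reflexivity. }
    apply is_lim_seq_mult'; auto. apply is_lim_seq_mult'; auto. apply is_lim_seq_const. }
  assert (L3 : is_lim_seq (fun n => c * (v (S n) * v n)) 0).
  { replace 0 with (c * (0 * 0)) by ring. apply is_lim_seq_mult'; [apply is_lim_seq_const|]. apply is_lim_seq_mult'.
    - apply (is_lim_seq_incr_1 v 0). apply ex_series_lim_0; auto.
    - apply ex_series_lim_0; auto. }
  assert (B := is_lim_seq_le _ _ _ _ W_bound L2 L3). simpl in B.
  assert (0 < (Im lam * Sv) ^ 2).
  { apply pow2_gt_0. apply Rmult_integral_contrapositive_currified; auto. lra. }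
  lra.
Qed.

End Green.

Lemma Rr_sym c Q r : 0 < Q < 1 -> c <> 0 -> forall n,
  Rr c Q n (- r) = (- c) ^ n * Rr (/ c) Q n (r / c).
Proof.
  intros HQ Hc.
  assert (H : forall n, Rr c Q n (- r) = (- c) ^ n * Rr (/ c) Q n (r / c) /\
                        Rr c Q (S n) (- r) = (- c) ^ (S n) * Rr (/ c) Q (S n) (r / c)).
  { induction n.
    - rewrite !Rr_0, !Rr_1. split; simpl; field; auto.
    - destruct IHn as [I0 I1]. split; auto.
      rewrite (Rr_rec c Q (- r) n HQ), (Rr_rec (/ c) Q (r / c) n HQ), I0, I1.
      simpl. field. auto. }
  intros n. apply H.
Qed.

Lemma tt_q q n : tt (q ^ 2) n = q ^ (n * (n - 1)).
Proof.
  induction n; cbn [tt]; [simpl; reflexivity|].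
  rewrite IHn, <- pow_mult, <- pow_add. f_equal. destruct n; simpl; lia.
Qed.

Lemma Cmod_Cpown_Ci n : Cmod (Cpown Ci n) = 1.
Proof. induction n; simpl; [apply Cmod_1|]. rewrite Cmod_mult, IHn, Cmod_Ci. ring. Qed.

Lemma Rpower_2x q a : 0 < q -> Rpower q (2 * a) = Rpower q a ^ 2.
Proof. intros Hq. simpl. rewrite Rmult_1_r, <- Rpower_plus. f_equal. ring. Qed.

Lemma Rpower_nat q n : 0 < q -> Rpower q (INR n) = q ^ n.
Proof. intros; apply Rpower_pow; auto. Qed.

Section Conv.
Variables (q sigma : R).
Hypothesis hq0 : 0 < q.
Hypothesis hq1 : q < 1.
Let c := Rpower q (2 * sigma).
Let Q := q ^ 2.

Lemma HQ : 0 < Q < 1.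
Proof. unfold Q. split; [apply pow_lt; lra|]. simpl. nra. Qed.
Lemma Hc : 0 < c.
Proof. unfold c, Rpower. apply exp_pos. Qed.

Lemma Qx_eq x : Rpower q (2 * INR x) = Q ^ x.
Proof.
  unfold Q. rewrite <- pow_mult. rewrite <- Rpower_nat by auto. replace (INR (2 * x)) with (2 * INR x) by (rewrite mult_INR; simpl; ring). reflexivity.
Qed.

Lemma Rp_mass x : Rpower q (2 * sigma + 2 * INR x) = c * Q ^ x.
Proof. rewrite Rpower_plus, Qx_eq. reflexivity. Qed.

Lemma Rp_mass2 x : Rpower q (2 + 2 * sigma + 2 * INR x) = Q * (c * Q ^ x).
Proof.
  rewrite Rpower_plus, Rpower_plus. unfold c. rewrite Qx_eq.
  replace (Rpower q 2) with Q. ring. unfold Q. rewrite <- Rpower_nat by auto. replace (INR 2) with 2 by (simpl; ring). reflexivity.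
Qed.

Lemma Rp_2 : Rpower q 2 = Q.
Proof. unfold Q. rewrite <- Rpower_nat by auto. replace (INR 2) with 2 by (simpl; ring). reflexivity. Qed.

Lemma Rp_neg : Rpower q (- 2 * sigma) = / c.
Proof. unfold c. rewrite <- Rpower_Ropp. f_equal. ring. Qed.

Lemma Rp_negn n : Rpower q (- 2 * sigma * INR n) = (/ c) ^ n.
Proof.
  rewrite <- Rp_neg. rewrite <- Rpower_nat by (unfold Rpower; apply exp_pos). rewrite Rpower_mult. reflexivity.
Qed.

Lemma inv_q2 x : / q ^ (2 * x) = (/ Q) ^ x.
Proof. unfold Q. rewrite pow_mult, pow_inv. reflexivity. Qed.

Lemma vnorm_eq lam n : vnorm2_term q sigma lam n = Cmod (RnP c Q n lam) ^ 2 / Hn c Q n.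
Proof.
  unfold vnorm2_term, phi_n. fold c. fold Q.
  unfold hatP. rewrite (hatP_Rn c Q lam HQ n). simpl fst.
  rewrite !Cmod_mult, Cmod_Cpown_Ci, Cmod_R.
  set (r := Rpower q (- sigma * INR n) * Rpower q (- (INR n * (INR n - 1)) / 2) / sqrt (qpoch Q Q n)).
  assert (Hr : r ^ 2 = / Hn c Q n).
  { unfold r. assert (P := qpQ_pos Q n HQ).
    assert (Hs : sqrt (qpoch Q Q n) ^ 2 = qpoch Q Q n) by (rewrite <- Rsqr_pow2; apply Rsqr_sqrt; lra).
    unfold Rdiv. rewrite !Rpow_mult_distr. rewrite pow_inv, Hs.
    rewrite <- !Rpower_2x by auto.
    replace (2 * (- sigma * INR n)) with (- (2 * sigma * INR n)) by ring.
    replace (2 * (- (INR n * (INR n - 1)) * / 2)) with (- (INR (n * (n - 1)))).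
    2:{ destruct n; [simpl; ring|]. replace (S n - 1)%nat with n by lia. rewrite mult_INR, S_INR. field. }
    rewrite !Rpower_Ropp, Rpower_nat by auto. rewrite <- Rpower_mult, Rpower_nat by (unfold Rpower; apply exp_pos).
    fold c. unfold Hn. unfold Q. rewrite tt_q. fold Q. field.
    split; [apply Rgt_not_eq; auto|]. split; [apply pow_nonzero; lra|]. apply pow_nonzero. apply Rgt_not_eq, Hc. }
  rewrite Rmult_1_l, Rpow_mult_distr, pow2_abs, Hr. unfold Rdiv. ring.
Qed.

Lemma mass_term y n : Rr c Q n (c * Q ^ y) ^ 2 / Hn c Q n = ww Q c n * ff Q c y n ^ 2.
Proof.
  rewrite (Rr_mass c Q y n HQ). unfold ww, ff, Hn.
  assert (P := qpQ_pos Q n HQ). assert (T := tt_pos Q n (proj1 HQ)). assert (Pc := Hc).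
  rewrite (pow_inv c n). field. repeat split; try lra. apply pow_nonzero; lra.
Qed.

End Conv.

Lemma mass_term_gen c Q y n : 0 < Q < 1 -> 0 < c ->
  Rr c Q n (c * Q ^ y) ^ 2 / Hn c Q n = ww Q c n * ff Q c y n ^ 2.
Proof.
  intros HQ Hc.
  rewrite (Rr_mass c Q y n HQ). unfold ww, ff, Hn.
  assert (P := qpQ_pos Q n HQ). assert (T := tt_pos Q n (proj1 HQ)).
  rewrite (pow_inv c n). field. repeat split; try lra. apply pow_nonzero; lra.
Qed.

Theorem mainTheorem2 (q sigma : R) (hq0 : 0 < q) (hq1 : q < 1) :
  (forall x : nat,
     let lam := RtoC (Rpower q (2 * sigma + 2 * INR x)) in
     let val := / q ^ (2 * x) * qpoch (q ^ 2) (q ^ 2) x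
                * qpoch (- Rpower q (2 * sigma + 2)) (q ^ 2) x
                * qpoch_inf (- Rpower q (- 2 * sigma)) (q ^ 2) in
     is_series (vnorm2_term q sigma lam) val /\
     is_series (fun n : nat =>
        q ^ (n * (n - 1)) * Rpower q (- 2 * sigma * INR n) / qpoch (q ^ 2) (q ^ 2) n
        * (phi21_trunc (/ q ^ (2 * x)) (/ q ^ (2 * n)) 0 (q ^ 2)
             (- Rpower q (2 + 2 * sigma + 2 * INR x)) n) ^ 2) val) /\
  (forall x : nat,
     is_series (vnorm2_term q sigma (RtoC (- q ^ (2 * x))))
       (/ q ^ (2 * x) * qpoch (q ^ 2) (q ^ 2) x
        * qpoch (- Rpower q (2 - 2 * sigma)) (q ^ 2) x
        * qpoch_inf (- Rpower q (2 * sigma)) (q ^ 2))) /\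
  (forall lam : C, lam <> RtoC 0 ->
     (forall x : nat, lam <> RtoC (- q ^ (2 * x))) ->
     (forall x : nat, lam <> RtoC (Rpower q (2 * sigma + 2 * INR x))) ->
     ~ v_in_l2 q sigma lam).
Proof.
  assert (HQ0 := HQ q hq0 hq1).
  assert (Hc0 := Hc q sigma).
  set (c := Rpower q (2 * sigma)) in *.
  set (Q := q ^ 2) in *.
  assert (Hc' : 0 < / c) by (apply Rinv_0_lt_compat; auto).
  assert (Hq2 : forall x, q ^ (2 * x) = Q ^ x) by (intros; unfold Q; apply pow_mult).
  assert (Hpos : forall x, Rpower q (2 * sigma + 2 * INR x) = c * Q ^ x) by (intros; apply Rp_mass; auto).
  assert (Hval1 : forall x, / q ^ (2 * x) * qpoch Q Q x * qpoch (- Rpower q (2 * sigma + 2)) Q x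
                * qpoch_inf (- Rpower q (- 2 * sigma)) Q
                = (/ Q) ^ x * qpoch Q Q x * qpoch (- (c * Q)) Q x * Eser Q (/ c)).
  { intros x. rewrite inv_q2. fold Q. rewrite Rpower_plus. rewrite Rp_2 by auto. fold Q c.
    rewrite Rp_neg. fold c. rewrite qpoch_inf_eq by auto. reflexivity. }
  split; [|split].
  - intros x lam val. unfold val. rewrite Hval1.
    assert (Ht : forall n, vnorm2_term q sigma lam n = ww Q c n * ff Q c x n ^ 2).
    { intros n. unfold lam. rewrite vnorm_eq by auto. fold c Q. rewrite Hpos.
      rewrite Rn_RtoC, Cmod_R, pow2_abs. apply mass_term_gen; auto. }
    split.
    + apply is_series_ext_R with (fun n => ww Q c n * ff Q c x n ^ 2); [intros; symmetry; apply Ht|].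
      apply charlier_norm; auto.
    + apply is_series_ext_R with (fun n => ww Q c n * ff Q c x n ^ 2).
      2:{ apply charlier_norm; auto. }
      intros n. unfold ww, ff. rewrite !inv_q2. fold Q. rewrite Rp_mass2 by auto. fold c Q.
      rewrite Rp_negn by auto. fold c. unfold Q. rewrite <- tt_q. fold Q. unfold Rdiv. ring.
  - intros x.
    replace (/ q ^ (2 * x) * qpoch Q Q x * qpoch (- Rpower q (2 - 2 * sigma)) Q x * qpoch_inf (- c) Q)
      with ((/ Q) ^ x * qpoch Q Q x * qpoch (- (/ c * Q)) Q x * Eser Q (/ / c)).
    2:{ rewrite inv_q2. fold Q. rewrite Rinv_inv. rewrite qpoch_inf_eq by auto.
        replace (2 - 2 * sigma) with (2 + (- 2 * sigma)) by ring. rewrite Rpower_plus, Rp_2, Rp_neg by auto.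
        fold c Q. rewrite Rmult_comm with (r1 := Q). reflexivity. }
    apply is_series_ext_R with (fun n => ww Q (/ c) n * ff Q (/ c) x n ^ 2).
    2:{ apply charlier_norm; auto. }
    intros n. rewrite vnorm_eq by auto. fold c Q. rewrite Hq2.
    rewrite Rn_RtoC, Cmod_R, pow2_abs. rewrite Rr_sym by (auto || lra).
    rewrite <- (mass_term_gen (/ c) Q x n HQ0 Hc').
    replace (Q ^ x / c) with (/ c * Q ^ x) by (unfold Rdiv; ring).
    unfold Hn. rewrite Rpow_mult_distr. rewrite (pow_inv c n).
    assert (P := qpQ_pos Q n HQ0). assert (T := tt_pos Q n (proj1 HQ0)).
    assert (Pc : 0 < c ^ n) by (apply pow_lt; auto).
    replace (((- c) ^ n) ^ 2) with ((c ^ n) ^ 2).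
    + field. repeat split; lra.
    + rewrite <- !pow_mult, !(Nat.mul_comm n 2), !pow_mult. replace ((- c) ^ 2) with (c ^ 2) by ring. reflexivity.
  - intros lam H0 Hneg Hposl Hl2. unfold v_in_l2 in Hl2.
    assert (Hex : ex_series (fun n => Cmod (RnP c Q n lam) ^ 2 / Hn c Q n)).
    { apply ex_series_ext_R with (vnorm2_term q sigma lam); auto. intros n. rewrite vnorm_eq by auto. reflexivity. }
    destruct (Req_dec (Im lam) 0) as [Him|Him].
    + set (al := Re lam).
      assert (Hlam : lam = RtoC al) by (apply injective_projections; simpl; [reflexivity| exact Him]).
      apply (real_not_l2 c Q al HQ0 Hc0).
      * intros E. apply H0. rewrite Hlam, E. reflexivity.
      * intros i E. apply (Hneg i). rewrite Hlam, E, Hq2. reflexivity.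
      * intros i E. apply (Hposl i). rewrite Hlam, E, Hpos. reflexivity.
      * apply ex_series_ext_R with (fun n => Cmod (RnP c Q n lam) ^ 2 / Hn c Q n); auto.
        intros n. rewrite Hlam, Rn_RtoC, Cmod_R, pow2_abs. reflexivity.
    + exact (nonreal_not_l2 c Q lam HQ0 Hc0 Him Hex).
Qed.
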